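(* Let $G\subset \mathrm{Homeo}_+([0,1])$ be a group without linked fixed points and let $\{a,b\}$ be a pair of successive fixed points of $G$. Then: (1) for every $g\in G$, either $g([a,b])=[a,b]$ or $g((a,b))\cap(a,b)=\emptyset$; let $G_{[a,b]}=\{g\in G: g([a,b])=[a,b]\}$ denote the stabilizer of $[a,b]$; (2) there is a group morphism $\tau_{a,b}:G_{[a,b]}\to\mathbb R$ whose kernel is exactly the set of $g\in G_{[a,b]}$ having a fixed point in $(a,b)$, and such that $\tau_{a,b}(g)>0$ if and only if $g(x)-x>0$ on $(a,b)$; this morphism is unique up to multiplication by a positive number; (3) the union $\Lambda_{a,b}$ of the minimal sets of the action of $G_{[a,b]}$ on $(a,b)$ is a non-empty closed subset of $(a,b)$ on which the action of $G_{[a,b]}$ is semi-conjugated to the action of the group of translations $\tau_{a,b}(G_{[a,b]})$ on $\mathbb R$; (4) every element of the kernel of $\tau_{a,b}$ induces the identity map on $\Lambda_{a,b}$.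
   Context: For a group $G$ of homeomorphisms of $[0,1]$, a pair of successive fixed points of $G$ is a pair $\{a,b\}$, $a<b$, such that $(a,b)$ is a connected component of $[0,1]\setminus \mathrm{Fix}(g)$ for some $g\in G$. Two pairs $\{a,b\}$ and $\{c,d\}$ are linked if $(a,b)\cap\{c,d\}$ or $(c,d)\cap\{a,b\}$ consists of exactly one point. $G$ is without linked fixed points if no two pairs of successive fixed points of $G$ are linked. A minimal set of an action on $(a,b)$ is a non-empty closed (in $(a,b)$) invariant set minimal for inclusion. *)

(* Defs.v *)
From Stdlib Require Import Reals.
Open Scope R_scope.

(* Homeo_+([0,1]): an increasing homeomorphism of [0,1], encoded as a map R -> R
   that is the identity outside [0,1] (so that group elements are determined by
   their values on [0,1] and composition/inverses are honest functions). *)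
Definition homeo01 (f : R -> R) : Prop :=
  (forall x, (x < 0 \/ 1 < x) -> f x = x) /\
  (forall x y, x < y -> f x < f y) /\
  continuity f /\
  (forall y, exists x, f x = y).

Definition homeo_group (G : (R -> R) -> Prop) : Prop :=
  (forall g, G g -> homeo01 g) /\
  G (fun x => x) /\
  (forall g h, G g -> G h -> G (fun x => g (h x))) /\
  (forall g, G g -> exists h, G h /\ forall x, h (g x) = x /\ g (h x) = x).

Definition component_of_nonfix (g : R -> R) (a b : R) : Prop :=
  0 <= a /\ a < b /\ b <= 1 /\ g a = a /\ g b = b /\
  (forall x, a < x < b -> g x <> x).

Definition succ_fixed (G : (R -> R) -> Prop) (a b : R) : Prop :=
  exists g, G g /\ component_of_nonfix g a b.

Definition exactly_one (P Q : Prop) : Prop := (P /\ ~ Q) \/ (~ P /\ Q).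

Definition linked (a b c d : R) : Prop :=
  exactly_one (a < c < b) (a < d < b) \/ exactly_one (c < a < d) (c < b < d).

Definition without_linked_fixed_points (G : (R -> R) -> Prop) : Prop :=
  forall a b c d, succ_fixed G a b -> succ_fixed G c d -> ~ linked a b c d.

Definition maps_onto_closed (g : R -> R) (a b : R) : Prop :=
  forall y, a <= y <= b <-> exists x, a <= x <= b /\ g x = y.

Definition disjoint_open (g : R -> R) (a b : R) : Prop :=
  forall x, a < x < b -> ~ (a < g x < b).

Definition stab (G : (R -> R) -> Prop) (a b : R) (g : R -> R) : Prop :=
  G g /\ maps_onto_closed g a b.

Definition is_tau (G : (R -> R) -> Prop) (a b : R) (tau : (R -> R) -> R) : Prop :=
  (forall g h, stab G a b g -> stab G a b h ->
     tau (fun x => g (h x)) = tau g + tau h) /\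
  (forall g, stab G a b g -> (tau g = 0 <-> exists x, a < x < b /\ g x = x)) /\
  (forall g, stab G a b g -> (tau g > 0 <-> forall x, a < x < b -> g x - x > 0)).

Definition rel_closed (a b : R) (M : R -> Prop) : Prop :=
  (forall x, M x -> a < x < b) /\
  (forall x, a < x < b ->
     (forall eps, eps > 0 -> exists y, M y /\ Rabs (y - x) < eps) -> M x).

Definition invariant_set (H : (R -> R) -> Prop) (M : R -> Prop) : Prop :=
  forall g, H g -> forall y, M y <-> exists x, M x /\ g x = y.

Definition minimal_set (H : (R -> R) -> Prop) (a b : R) (M : R -> Prop) : Prop :=
  (exists x, M x) /\ rel_closed a b M /\ invariant_set H M /\
  (forall N, (exists x, N x) -> rel_closed a b N -> invariant_set H N ->
     (forall x, N x -> M x) -> forall x, M x -> N x).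

Definition Lambda (G : (R -> R) -> Prop) (a b : R) (x : R) : Prop :=
  exists M, minimal_set (stab G a b) a b M /\ M x.

Definition semi_conjugated (H : (R -> R) -> Prop) (L : R -> Prop)
    (tau : (R -> R) -> R) : Prop :=
  exists phi : R -> R,
    (forall x y, L x -> L y -> x <= y -> phi x <= phi y) /\
    (forall x, L x -> forall eps, eps > 0 -> exists delta, delta > 0 /\
       forall y, L y -> Rabs (y - x) < delta -> Rabs (phi y - phi x) < eps) /\
    (forall g x, H g -> L x -> phi (g x) = phi x + tau g).

(* Main.v *)
Require Import Defs.
From Stdlib Require Import Reals Lra Lia ClassicalEpsilon Classical FunctionalExtensionality.
Open Scope R_scope.

Lemma cont_eps (g : R -> R) : continuity g -> forall x eps, eps > 0 ->
  exists delta, delta > 0 /\ forall y, Rabs (y - x) < delta -> Rabs (g y - g x) < eps.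
Proof.
  intros Hc x eps He. destruct (Hc x eps He) as [d [Hd H]].
  exists d; split; auto. intros y Hy.
  destruct (Req_dec y x) as [->|Hne].
  - unfold Rminus; rewrite Rplus_opp_r, Rabs_R0; lra.
  - apply (H y). split. split; [exact I| auto]. exact Hy.
Qed.

Lemma fix_closed (g : R -> R) m : continuity g ->
  (forall eps, eps > 0 -> exists x, Rabs (x - m) < eps /\ g x = x) -> g m = m.
Proof.
  intros Hc H. destruct (Req_dec (g m) m) as [|Hne]; auto.
  set (e := Rabs (g m - m) / 2).
  assert (He : e > 0). { unfold e. assert (Rabs (g m - m) > 0) by (apply Rabs_pos_lt; lra). lra. }
  destruct (cont_eps g Hc m e He) as [d [Hd Hd']].
  destruct (H (Rmin d e) ltac:(apply Rmin_pos; lra)) as [x [Hx Hgx]].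
  assert (Rabs (x - m) < d) by (eapply Rlt_le_trans; [exact Hx| apply Rmin_l]).
  assert (Rabs (x - m) < e) by (eapply Rlt_le_trans; [exact Hx| apply Rmin_r]).
  specialize (Hd' x H0). rewrite Hgx in Hd'.
  assert (Rabs (g m - m) <= Rabs (g m - x) + Rabs (x - m)).
  { replace (g m - m) with ((g m - x) + (x - m)) by ring. apply Rabs_triang. }
  rewrite Rabs_minus_sym in Hd'. unfold e in *. lra.
Qed.

Lemma sup_fix (g : R -> R) u p : continuity g -> u <= p -> g u = u ->
  exists c, u <= c <= p /\ g c = c /\ forall x, c < x <= p -> g x <> x.
Proof.
  intros Hc Hup Hu.
  set (E := fun x => u <= x <= p /\ g x = x).
  assert (Hb : bound E) by (exists p; intros x [Hx _]; lra).
  assert (Hne : exists x, E x) by (exists u; split; [lra|auto]).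
  destruct (completeness E Hb Hne) as [c [Hub Hlub]].
  assert (Huc : u <= c) by (apply Hub; split; [lra|auto]).
  assert (Hcp : c <= p) by (apply Hlub; intros x [Hx _]; lra).
  exists c. split; [lra|]. split.
  - apply fix_closed; auto. intros eps He.
    destruct (classic (exists x, E x /\ c - eps < x)) as [[x [[Hx1 Hx2] Hx3]]|Hn].
    + exists x. split; auto. assert (x <= c) by (apply Hub; split; auto).
      rewrite Rabs_left1; lra.
    + exfalso. assert (c <= c - eps); [|lra]. apply Hlub. intros x Hx.
      destruct (Rlt_or_le (c - eps) x); auto. exfalso; apply Hn; eauto.
  - intros x Hx Hgx. assert (x <= c) by (apply Hub; split; [lra|auto]). lra.
Qed.

Lemma inf_fix (g : R -> R) p v : continuity g -> p <= v -> g v = v ->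
  exists d, p <= d <= v /\ g d = d /\ forall x, p <= x < d -> g x <> x.
Proof.
  intros Hc Hpv Hv.
  set (g' := fun x => - g (- x)).
  assert (Hc' : continuity g').
  { unfold g'. intro x. apply continuity_pt_opp.
    apply (continuity_pt_comp (fun x => - x) g). apply continuity_pt_opp, derivable_continuous_pt, derivable_pt_id. apply Hc. }
  destruct (sup_fix g' (-v) (-p) Hc' ltac:(lra)) as [c [Hc1 [Hc2 Hc3]]].
  { unfold g'. rewrite Ropp_involutive, Hv. ring. }
  exists (-c). split; [lra|]. split.
  - unfold g' in Hc2. lra.
  - intros x Hx Hgx. apply (Hc3 (-x)); [lra|]. unfold g'. rewrite Ropp_involutive, Hgx. ring.
Qed.
Ltac prove_linked :=
  unfold linked, exactly_one;
  first
  [ left; left; split; [split; lra | intros [? ?]; lra]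
  | left; right; split; [intros [? ?]; lra | split; lra]
  | right; left; split; [split; lra | intros [? ?]; lra]
  | right; right; split; [intros [? ?]; lra | split; lra] ].

Lemma unlinked_cases a b c d : a < b -> c < d -> ~ linked a b c d ->
  (d <= a \/ b <= c) \/ (c = a /\ d = b) \/ (a < c /\ d < b) \/ (c < a /\ b < d).
Proof.
  intros Hab Hcd Hl.
  destruct (Rle_or_lt d a); [left; left; auto|].
  destruct (Rle_or_lt b c); [left; right; auto|].
  destruct (Rtotal_order c a) as [H1|[H1|H1]];
  destruct (Rtotal_order d b) as [H2|[H2|H2]];
  try (right; left; split; lra);
  try (right; right; left; split; lra);
  try (right; right; right; split; lra);
  exfalso; apply Hl; prove_linked.
Qed.

Section Main.
Variable G : (R -> R) -> Prop.
Variables a b : R.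
Hypothesis HG : homeo_group G.
Hypothesis Hnl : without_linked_fixed_points G.
Hypothesis Hab : succ_fixed G a b.

Lemma G_inc g : G g -> forall x y, x < y -> g x < g y.
Proof. intro Hg. destruct HG as [H _]. apply (H g Hg). Qed.
Lemma G_cont g : G g -> continuity g.
Proof. intro Hg. destruct HG as [H _]. apply (H g Hg). Qed.
Lemma G_surj g : G g -> forall y, exists x, g x = y.
Proof. intro Hg. destruct HG as [H _]. apply (H g Hg). Qed.
Lemma G_out g : G g -> forall x, (x < 0 \/ 1 < x) -> g x = x.
Proof. intro Hg. destruct HG as [H _]. apply (H g Hg). Qed.
Lemma G_id : G (fun x => x).
Proof. apply HG. Qed.
Lemma G_comp g h : G g -> G h -> G (fun x => g (h x)).
Proof. apply HG. Qed.

Lemma G_le g x y : G g -> (g x <= g y <-> x <= y).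
Proof.
  intro Hg. split; intro H.
  - destruct (Rle_or_lt x y); auto. pose proof (G_inc g Hg y x H0). lra.
  - destruct (Req_dec x y) as [->|]; [lra|]. left; apply (G_inc g Hg); lra.
Qed.
Lemma G_lt g x y : G g -> (g x < g y <-> x < y).
Proof.
  intro Hg. split; intro H.
  - destruct (Rlt_or_le x y); auto. apply (G_le g y x Hg) in H0. lra.
  - apply (G_inc g Hg); auto.
Qed.
Lemma G_inj g x y : G g -> g x = g y -> x = y.
Proof.
  intros Hg H. destruct (Rtotal_order x y) as [H1|[H1|H1]]; auto;
  apply (G_inc g Hg) in H1; lra.
Qed.

Definition ginv (g : R -> R) : R -> R :=
  epsilon (inhabits (fun x : R => x))
    (fun h => G h /\ forall x, h (g x) = x /\ g (h x) = x).

Lemma ginv_spec g : G g -> G (ginv g) /\ forall x, ginv g (g x) = x /\ g (ginv g x) = x.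
Proof.
  intro Hg. unfold ginv. apply epsilon_spec. destruct HG as [_ [_ [_ H]]]. apply H; auto.
Qed.
Lemma G_inv g : G g -> G (ginv g).
Proof. intro Hg. apply (ginv_spec g Hg). Qed.
Lemma ginv_l g x : G g -> ginv g (g x) = x.
Proof. intro Hg. apply (ginv_spec g Hg). Qed.
Lemma ginv_r g x : G g -> g (ginv g x) = x.
Proof. intro Hg. apply (ginv_spec g Hg). Qed.

Lemma G_0 g : G g -> g 0 = 0.
Proof.
  intro Hg. destruct (Rtotal_order (g 0) 0) as [H|[H|H]]; auto.
  - assert (g (g 0) = g 0) by (apply (G_out g Hg); lra).
    apply (G_inj g) in H0; auto; lra.
  - destruct (G_surj g Hg (g 0 / 2)) as [z Hz].
    assert (z < 0). { apply (G_lt g z 0 Hg). lra. }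
    rewrite (G_out g Hg z) in Hz by lra. lra.
Qed.
Lemma G_1 g : G g -> g 1 = 1.
Proof.
  intro Hg. destruct (Rtotal_order (g 1) 1) as [H|[H|H]]; auto.
  - destruct (G_surj g Hg ((g 1 + 1) / 2)) as [z Hz].
    assert (1 < z). { apply (G_lt g 1 z Hg). lra. }
    rewrite (G_out g Hg z) in Hz by lra. lra.
  - assert (g (g 1) = g 1) by (apply (G_out g Hg); lra).
    apply (G_inj g) in H0; auto; lra.
Qed.

Definition Ib x := a < x < b.
Definition H g := stab G a b g.

Lemma ab_props : 0 <= a /\ a < b /\ b <= 1.
Proof. destruct Hab as [f [_ [? [? [? _]]]]]. lra. Qed.

Lemma H_G g : H g -> G g.
Proof. intros [? _]; auto. Qed.

Lemma H_fix g : H g -> g a = a /\ g b = b.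
Proof.
  intros [Hg Hm]. pose proof ab_props.
  destruct (proj1 (Hm a) ltac:(lra)) as [x [Hx Hgx]].
  destruct (proj1 (Hm b) ltac:(lra)) as [y [Hy Hgy]].
  assert (Ha : a <= g a <= b) by (apply Hm; exists a; split; [lra|auto]).
  assert (Hb : a <= g b <= b) by (apply Hm; exists b; split; [lra|auto]).
  assert (g a <= g x) by (apply G_le; auto; lra).
  assert (g y <= g b) by (apply G_le; auto; lra).
  split; lra.
Qed.

Lemma fix_H g : G g -> g a = a -> g b = b -> H g.
Proof.
  intros Hg Ha Hb. split; auto. intro y. split.
  - intros Hy. destruct (G_surj g Hg y) as [x Hx]. exists x. split; auto.
    split.
    + apply (G_le g a x Hg). lra.
    + apply (G_le g x b Hg). lra.
  - intros [x [Hx <-]]. split.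
    + rewrite <- Ha. apply G_le; auto; lra.
    + rewrite <- Hb. apply G_le; auto; lra.
Qed.

Lemma H_I g x : H g -> Ib x -> Ib (g x).
Proof.
  intros Hh Hx. destruct (H_fix g Hh) as [Ha Hb]. unfold Ib in *.
  split; [rewrite <- Ha at 1 | rewrite <- Hb]; apply (G_lt g); auto; try apply H_G; auto; lra.
Qed.

Lemma H_id : H (fun x => x).
Proof. apply fix_H; auto. apply G_id. Qed.
Lemma H_comp g h : H g -> H h -> H (fun x => g (h x)).
Proof.
  intros H1 H2. destruct (H_fix g H1), (H_fix h H2).
  apply fix_H; [apply G_comp; apply H_G; auto| |]; congruence.
Qed.
Lemma H_inv g : H g -> H (ginv g).
Proof.
  intros H1. destruct (H_fix g H1). pose proof (H_G g H1).
  apply fix_H; [apply G_inv; auto| |].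
  - rewrite <- H0 at 1. apply ginv_l; auto.
  - rewrite <- H2 at 1. apply ginv_l; auto.
Qed.

Lemma pair_cases c d e f : succ_fixed G c d -> succ_fixed G e f ->
  (f <= c \/ d <= e) \/ (e = c /\ f = d) \/ (c < e /\ f < d) \/ (e < c /\ d < f).
Proof.
  intros H1 H2. apply unlinked_cases.
  - destruct H1 as [g [_ [? [? _]]]]; auto.
  - destruct H2 as [g [_ [? [? _]]]]; auto.
  - apply Hnl; auto.
Qed.

Lemma comp_exists g u p v : G g -> 0 <= u -> u < p -> p < v -> v <= 1 ->
  g u = u -> g v = v -> g p <> p ->
  exists c d, u <= c < p /\ p < d <= v /\ component_of_nonfix g c d.
Proof.
  intros Hg H0 H1 H2 H3 Hu Hv Hp.
  destruct (sup_fix g u p (G_cont g Hg) ltac:(lra) Hu) as [c [Hc1 [Hc2 Hc3]]].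
  destruct (inf_fix g p v (G_cont g Hg) ltac:(lra) Hv) as [d [Hd1 [Hd2 Hd3]]].
  assert (c < p) by (destruct (Req_dec c p); [subst; contradiction|lra]).
  assert (p < d) by (destruct (Req_dec d p); [subst; contradiction|lra]).
  exists c, d. split; [lra|]. split; [lra|].
  repeat split; try lra; auto.
  intros x Hx. destruct (Rle_or_lt x p).
  - apply Hc3; lra.
  - apply Hd3; lra.
Qed.


Lemma ivt_fix g x y : continuity g -> x <= y -> x <= g x -> g y <= y ->
  exists z, x <= z <= y /\ g z = z.
Proof.
  intros Hc Hxy Hx Hy.
  destruct (Req_dec (g x) x). { exists x; split; [lra|auto]. }
  destruct (Req_dec (g y) y). { exists y; split; [lra|auto]. }
  destruct (IVT (fun t => t - g t) x y) as [z [Hz1 Hz2]]; try lra.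
  - apply continuity_minus; auto. intro t; apply derivable_continuous_pt, derivable_pt_id.
  - destruct (Req_dec x y); [subst; lra| lra].
  - exists z. split; auto. lra.
Qed.
Lemma ivt_fix' g x y : continuity g -> x <= y -> g x <= x -> y <= g y ->
  exists z, x <= z <= y /\ g z = z.
Proof.
  intros Hc Hxy Hx Hy.
  destruct (Req_dec (g x) x). { exists x; split; [lra|auto]. }
  destruct (Req_dec (g y) y). { exists y; split; [lra|auto]. }
  destruct (IVT (fun t => g t - t) x y) as [z [Hz1 Hz2]]; try lra.
  - apply continuity_minus; auto. intro t; apply derivable_continuous_pt, derivable_pt_id.
  - destruct (Req_dec x y); [subst; lra| lra].
  - exists z. split; auto. lra.
Qed.

Lemma no_shrink g : G g -> a < g a -> g b < b -> False.
Proof.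
  intros Hg H1 H2. pose proof ab_props as [Ha0 [Hab' Hb1]].
  assert (0 < a). { destruct (Req_dec a 0); [subst; rewrite G_0 in H1; auto; lra| lra]. }
  destruct (comp_exists g 0 a 1 Hg) as [c [d [Hc [Hd [_ [_ [_ [Hgc [Hgd Hno]]]]]]]]];
    try lra; [apply G_0; auto| apply G_1; auto|].
  assert (d < b).
  { destruct (Rlt_or_le d b) as [|Hdb]; auto. exfalso.
    destruct (ivt_fix g a b (G_cont g Hg)) as [z [Hz Hgz]]; try lra.
    destruct (Req_dec d b) as [->|]; [lra|].
    apply (Hno z); auto. lra. }
  assert (Hs : succ_fixed G c d).
  { exists g. split; auto. repeat split; auto; lra. }
  destruct (pair_cases a b c d Hab Hs) as [[?|?]|[[? ?]|[[? ?]|[? ?]]]]; lra.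
Qed.

Lemma part1 g : G g -> maps_onto_closed g a b \/ disjoint_open g a b.
Proof.
  intro Hg. pose proof ab_props as [Ha0 [Hab' Hb1]].
  destruct (classic (g a = a /\ g b = b)) as [[Ha Hb]|Hn].
  { left. apply (fix_H g Hg Ha Hb). }
  destruct Hab as [f0 [Hf0 [_ [_ [_ [Hfa [Hfb Hfno]]]]]]].
  set (h := fun x => g (f0 (ginv g x))).
  assert (Hs : succ_fixed G (g a) (g b)).
  { exists h. split. { unfold h. apply G_comp; auto. apply G_comp; auto. apply G_inv; auto. }
    repeat split.
    - rewrite <- (G_0 g Hg). apply G_le; auto.
    - apply G_lt; auto.
    - rewrite <- (G_1 g Hg). apply G_le; auto.
    - unfold h. rewrite ginv_l, Hfa; auto.
    - unfold h. rewrite ginv_l, Hfb; auto.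
    - intros x Hx Hhx. unfold h in Hhx.
      apply (Hfno (ginv g x)).
      + split.
        * apply (G_lt g); auto. rewrite ginv_r; auto; lra.
        * apply (G_lt g); auto. rewrite ginv_r; auto; lra.
      + apply (G_inj g); auto. rewrite ginv_r; auto. }
  assert (Hlt : g a < g b) by (apply G_lt; auto).
  destruct (pair_cases a b (g a) (g b) Hab Hs) as [[Hd|Hd]|[[H1 H2]|[[H1 H2]|[H1 H2]]]].
  - right. intros x Hx Hgx. assert (g x < g b) by (apply G_lt; auto; lra). lra.
  - right. intros x Hx Hgx. assert (g a < g x) by (apply G_lt; auto; lra). lra.
  - exfalso; apply Hn; split; auto.
  - exfalso. apply (no_shrink g); auto.
  - exfalso. apply (no_shrink (ginv g)); [apply G_inv; auto| |].
    + apply (G_lt g); auto. rewrite ginv_r; auto.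
    + apply (G_lt g); auto. rewrite ginv_r; auto.
Qed.


Definition pos g := forall x, Ib x -> x < g x.
Definition neg g := forall x, Ib x -> g x < x.
Definition kerp g := exists x, Ib x /\ g x = x.

Lemma Ib_ne : Ib ((a + b) / 2).
Proof. pose proof ab_props. unfold Ib. lra. Qed.

Lemma trich g : H g -> kerp g \/ pos g \/ neg g.
Proof.
  intro Hg. destruct (classic (kerp g)) as [|Hk]; [left; auto|right].
  pose proof (G_cont g (H_G g Hg)) as Hc. pose proof Ib_ne as Hm. set (m := (a+b)/2) in *.
  assert (Hnf : forall z, Ib z -> g z <> z) by (intros z Hz Hgz; apply Hk; exists z; auto).
  destruct (Rlt_or_le m (g m)) as [Hlt|Hle].
  - left. intros x Hx. destruct (Rlt_or_le x (g x)); auto. exfalso.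
    destruct (Rle_or_lt x m).
    + destruct (ivt_fix' g x m Hc) as [z [Hz Hgz]]; try lra.
      apply (Hnf z); auto. unfold Ib in *; lra.
    + destruct (ivt_fix g m x Hc) as [z [Hz Hgz]]; try lra.
      apply (Hnf z); auto. unfold Ib in *; lra.
  - right. assert (g m <> m) by (apply Hnf; auto).
    intros x Hx. destruct (Rlt_or_le (g x) x); auto. exfalso.
    destruct (Rle_or_lt x m).
    + destruct (ivt_fix g x m Hc) as [z [Hz Hgz]]; try lra.
      apply (Hnf z); auto. unfold Ib in *; lra.
    + destruct (ivt_fix' g m x Hc) as [z [Hz Hgz]]; try lra.
      apply (Hnf z); auto. unfold Ib in *; lra.
Qed.

Lemma ker_inside g p : H g -> kerp g -> Ib p -> g p <> p ->
  exists c d, a < c < p /\ p < d < b /\ component_of_nonfix g c d.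
Proof.
  intros Hg [q [Hq Hgq]] Hp Hgp. pose proof ab_props. destruct (H_fix g Hg).
  unfold Ib in *.
  destruct (comp_exists g a p b (H_G g Hg)) as [c [d [Hc [Hd Hcomp]]]]; try lra; auto.
  assert (Hs : succ_fixed G c d) by (exists g; split; auto; apply H_G; auto).
  destruct (pair_cases a b c d Hab Hs) as [[?|?]|[[? ?]|[[? ?]|[? ?]]]]; try lra.
  - subst. exfalso. destruct Hcomp as [_ [_ [_ [_ [_ Hno]]]]]. apply (Hno q); auto.
  - exists c, d. split; [lra|]. split; [lra|]. auto.
Qed.

Lemma common_fix g1 g2 : H g1 -> H g2 -> kerp g1 -> kerp g2 ->
  exists p, Ib p /\ g1 p = p /\ g2 p = p.
Proof.
  intros H1 H2 K1 K2. destruct K2 as [p [Hp Hgp]] eqn:E.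
  destruct (Req_dec (g1 p) p). { exists p; auto. }
  destruct (ker_inside g1 p H1 K1 Hp H0) as [c [d [Hc [Hd Hcd]]]].
  destruct Hcd as [? [? [? [Hgc [Hgd Hno1]]]]].
  assert (Ic : Ib c) by (unfold Ib in *; lra).
  destruct (Req_dec (g2 c) c). { exists c; auto. }
  destruct (ker_inside g2 c H2 (ex_intro _ p (conj Hp Hgp)) Ic H6) as [e [f [He [Hf Hef]]]].
  assert (S1 : succ_fixed G c d) by (exists g1; split; [apply H_G; auto| repeat split; auto]).
  assert (S2 : succ_fixed G e f) by (exists g2; split; [apply H_G; auto| auto]).
  destruct Hef as [_ [_ [_ [_ [_ Hno2]]]]].
  destruct (pair_cases c d e f S1 S2) as [[?|?]|[[? ?]|[[? ?]|[? ?]]]]; try lra.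
  exfalso. apply (Hno2 p); auto. lra.
Qed.

Lemma kerp_comp g1 g2 : H g1 -> H g2 -> kerp g1 -> kerp g2 -> kerp (fun x => g1 (g2 x)).
Proof.
  intros. destruct (common_fix g1 g2) as [p [Hp [E1 E2]]]; auto.
  exists p. split; auto. rewrite E2; auto.
Qed.
Lemma kerp_inv g : H g -> kerp g -> kerp (ginv g).
Proof.
  intros Hg [p [Hp E]]. exists p. split; auto. rewrite <- E at 1. apply ginv_l, H_G; auto.
Qed.

Definition ltf (u v : R -> R) := forall x, Ib x -> u x < v x.
Definition lef (u v : R -> R) := exists x, Ib x /\ u x <= v x.
Definition eqf (u v : R -> R) := exists x, Ib x /\ u x = v x.

Lemma O1 u v : H u -> H v -> ltf u v \/ eqf u v \/ ltf v u.
Proof.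
  intros Hu Hv. pose proof (H_G v Hv) as Gv.
  set (d := fun x => ginv v (u x)).
  assert (Hd : H d) by (unfold d; apply H_comp; auto; apply H_inv; auto).
  destruct (trich d Hd) as [[p [Hp E]]|[P|N]].
  - right; left. exists p. split; auto. unfold d in E. rewrite <- E at 2. rewrite ginv_r; auto.
  - right; right. intros x Hx. specialize (P x Hx). unfold d in P.
    apply (G_lt v) in P; auto. rewrite ginv_r in P; auto.
  - left. intros x Hx. specialize (N x Hx). unfold d in N.
    apply (G_lt v) in N; auto. rewrite ginv_r in N; auto.
Qed.

Lemma eqf_trans u v w : H u -> H v -> H w -> eqf u v -> eqf v w -> eqf u w.
Proof.
  intros Hu Hv Hw [p [Hp E1]] [q [Hq E2]]. pose proof (H_G v Hv) as Gv.
  destruct (common_fix (fun x => ginv v (u x)) (fun x => ginv v (w x))) as [r [Hr [R1 R2]]].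
  - apply H_comp; auto; apply H_inv; auto.
  - apply H_comp; auto; apply H_inv; auto.
  - exists p. split; auto. rewrite E1. apply ginv_l; auto.
  - exists q. split; auto. rewrite <- E2. apply ginv_l; auto.
  - exists r. split; auto.
    apply (f_equal v) in R1. apply (f_equal v) in R2. rewrite ginv_r in R1, R2; auto. congruence.
Qed.
Lemma eqf_sym u v : eqf u v -> eqf v u.
Proof. intros [p [Hp E]]; exists p; auto. Qed.
Lemma eqf_refl u : eqf u u.
Proof. exists ((a+b)/2). split; auto. apply Ib_ne. Qed.
Lemma ltf_eqf u v : ltf u v -> eqf u v -> False.
Proof. intros L [p [Hp E]]. specialize (L p Hp). lra. Qed.
Lemma ltf_eqf' u v : ltf v u -> eqf u v -> False.
Proof. intros L [p [Hp E]]. specialize (L p Hp). lra. Qed.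
Lemma ltf_trans u v w : ltf u v -> ltf v w -> ltf u w.
Proof. intros A B x Hx. specialize (A x Hx); specialize (B x Hx); lra. Qed.
Lemma ltf_lef u v : ltf u v -> lef u v.
Proof. intros L. exists ((a+b)/2). split; [apply Ib_ne|]. left; apply L, Ib_ne. Qed.
Lemma eqf_lef u v : eqf u v -> lef u v.
Proof. intros [p [Hp E]]. exists p; split; auto; lra. Qed.
Lemma lef_ltf u v : lef u v -> ltf v u -> False.
Proof. intros [p [Hp E]] L. specialize (L p Hp). lra. Qed.
Lemma nltf_lef u v : H u -> H v -> ~ ltf v u -> lef u v.
Proof.
  intros Hu Hv N. destruct (O1 u v Hu Hv) as [L|[E|L]].
  - apply ltf_lef; auto.
  - apply eqf_lef; auto.
  - contradiction.
Qed.

Lemma O3 u v w : H u -> H v -> H w -> lef u v -> ltf v w -> ltf u w.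
Proof.
  intros Hu Hv Hw L1 L2. destruct (O1 u w Hu Hw) as [L|[E|L]]; auto.
  - exfalso. destruct (O1 u v Hu Hv) as [L'|[E'|L']].
    + apply (ltf_eqf u w); auto. apply (ltf_trans _ v); auto.
    + apply (ltf_eqf v w); auto. apply (eqf_trans v u w); auto. apply eqf_sym; auto.
    + apply (lef_ltf u v); auto.
  - exfalso. apply (lef_ltf u v); auto. apply (ltf_trans _ w); auto.
Qed.
Lemma O4 u v w : H u -> H v -> H w -> ltf u v -> lef v w -> ltf u w.
Proof.
  intros Hu Hv Hw L1 L2. destruct (O1 u w Hu Hw) as [L|[E|L]]; auto.
  - exfalso. destruct (O1 v w Hv Hw) as [L'|[E'|L']].
    + apply (ltf_eqf u w); auto. apply (ltf_trans _ v); auto.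
    + apply (ltf_eqf u v); auto. apply (eqf_trans u w v); auto. apply eqf_sym; auto.
    + apply (lef_ltf v w); auto.
  - exfalso. apply (lef_ltf v w); auto. apply (ltf_trans _ u); auto.
Qed.
Lemma lef_trans u v w : H u -> H v -> H w -> lef u v -> lef v w -> lef u w.
Proof.
  intros Hu Hv Hw L1 L2. apply nltf_lef; auto. intro L.
  apply (lef_ltf u v); auto. apply (O3 v w u); auto.
Qed.

Lemma ltf_compl k u v : G k -> ltf u v -> ltf (fun x => k (u x)) (fun x => k (v x)).
Proof. intros Gk L x Hx. apply (G_lt k); auto. Qed.
Lemma ltf_compr k u v : H k -> ltf u v -> ltf (fun x => u (k x)) (fun x => v (k x)).
Proof. intros Hk L x Hx. apply L, H_I; auto. Qed.
Lemma lef_compl k u v : G k -> lef u v -> lef (fun x => k (u x)) (fun x => k (v x)).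
Proof. intros Gk [p [Hp E]]. exists p. split; auto. apply G_le; auto. Qed.
Lemma lef_compr k u v : H k -> lef u v -> lef (fun x => u (k x)) (fun x => v (k x)).
Proof.
  intros Hk [p [Hp E]]. exists (ginv k p). split; [apply H_I; auto; apply H_inv; auto|].
  rewrite ginv_r; auto. apply H_G; auto.
Qed.
Lemma eqf_compl k u v : eqf u v -> eqf (fun x => k (u x)) (fun x => k (v x)).
Proof. intros [p [Hp E]]. exists p. split; auto. rewrite E; auto. Qed.
Lemma eqf_compr k u v : H k -> eqf u v -> eqf (fun x => u (k x)) (fun x => v (k x)).
Proof.
  intros Hk [p [Hp E]]. exists (ginv k p). split; [apply H_I; auto; apply H_inv; auto|].
  rewrite ginv_r; auto. apply H_G; auto.
Qed.

Lemma lef_mul u v u' v' : H u -> H v -> H u' -> H v' -> lef u v -> lef u' v' ->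
  lef (fun x => u (u' x)) (fun x => v (v' x)).
Proof.
  intros. apply (lef_trans _ (fun x => v (u' x))); try (apply H_comp; auto).
  - apply lef_compr; auto.
  - apply lef_compl; auto. apply H_G; auto.
Qed.
Lemma ltf_mul u v u' v' : H u -> H v' -> ltf u v -> ltf u' v' ->
  ltf (fun x => u (u' x)) (fun x => v (v' x)).
Proof.
  intros Hu Hv' L1 L2 x Hx. apply (Rlt_trans _ (u (v' x))).
  - apply (G_lt u); auto. apply H_G; auto.
  - apply L1, H_I; auto.
Qed.
Lemma eqf_mul u v u' v' : H u -> H v -> H u' -> H v' -> eqf u v -> eqf u' v' ->
  eqf (fun x => u (u' x)) (fun x => v (v' x)).
Proof.
  intros. apply (eqf_trans _ (fun x => v (u' x))); try (apply H_comp; auto).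
  - apply eqf_compr; auto.
  - apply eqf_compl; auto.
Qed.
Lemma ltf_lef_mul u v u' v' : H u -> H v -> H u' -> H v' -> ltf u v -> lef u' v' ->
  ltf (fun x => u (u' x)) (fun x => v (v' x)).
Proof.
  intros. apply (O4 _ (fun x => v (u' x))); try (apply H_comp; auto).
  - apply ltf_compr; auto.
  - apply lef_compl; auto. apply H_G; auto.
Qed.
Lemma lef_ltf_mul u v u' v' : H u -> H v -> H u' -> H v' -> lef u v -> ltf u' v' ->
  ltf (fun x => u (u' x)) (fun x => v (v' x)).
Proof.
  intros. apply (O3 _ (fun x => v (u' x))); try (apply H_comp; auto).
  - apply lef_compr; auto.
  - apply ltf_compl; auto. apply H_G; auto.
Qed.

Fixpoint pw (u : R -> R) (n : nat) : R -> R :=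
  match n with O => fun x => x | S n => fun x => u (pw u n x) end.

Lemma H_pw u n : H u -> H (pw u n).
Proof. intro Hu. induction n; simpl; [apply H_id| apply H_comp; auto]. Qed.
Lemma pw_add u n m x : pw u (n + m) x = pw u n (pw u m x).
Proof. induction n; simpl; auto. rewrite IHn; auto. Qed.
Lemma pw_mul u n k : pw (pw u n) k = pw u (n * k).
Proof.
  apply functional_extensionality. intro x. induction k; simpl.
  - rewrite Nat.mul_0_r; auto.
  - rewrite IHk. replace (n * S k)%nat with (n + n * k)%nat by lia. rewrite pw_add; auto.
Qed.
Lemma pw_inv_l u n x : G u -> pw (ginv u) n (pw u n x) = x.
Proof.
  intro Gu. induction n; [reflexivity|].
  change (pw u (S n) x) with (u (pw u n x)).
  replace (S n) with (n + 1)%nat by lia. rewrite pw_add. simpl. rewrite ginv_l; auto.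
Qed.
Lemma pw_inv_r u n x : G u -> pw u n (pw (ginv u) n x) = x.
Proof.
  intro Gu. induction n; [reflexivity|].
  change (pw (ginv u) (S n) x) with (ginv u (pw (ginv u) n x)).
  replace (S n) with (n + 1)%nat by lia. rewrite pw_add. simpl. rewrite ginv_r; auto.
Qed.
Lemma pw_pos_le u n x : H u -> pos u -> Ib x -> x <= pw u n x.
Proof.
  intros Hu Pu Hx. induction n; simpl; [lra|].
  assert (Ib (pw u n x)) by (apply H_I; auto; apply H_pw; auto).
  specialize (Pu _ H0). lra.
Qed.
Lemma pw_pos u n : H u -> pos u -> (n > 0)%nat -> pos (pw u n).
Proof.
  intros Hu Pu Hn x Hx. destruct n; [lia|]. simpl.
  pose proof (pw_pos_le u n x Hu Pu Hx).
  assert (Ib (pw u n x)) by (apply H_I; auto; apply H_pw; auto).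
  specialize (Pu _ H1). lra.
Qed.

Definition zpw (u : R -> R) (m : Z) : R -> R :=
  if (0 <=? m)%Z then pw u (Z.to_nat m) else pw (ginv u) (Z.to_nat (- m)).

Lemma H_zpw u m : H u -> H (zpw u m).
Proof.
  intro Hu. unfold zpw. destruct (0 <=? m)%Z; apply H_pw; auto. apply H_inv; auto.
Qed.
Lemma zpw_nat u n : zpw u (Z.of_nat n) = pw u n.
Proof.
  unfold zpw. replace (0 <=? Z.of_nat n)%Z with true by (symmetry; apply Z.leb_le; lia).
  replace (Z.to_nat (Z.of_nat n)) with n by lia; auto.
Qed.
Lemma zpw_0 u x : zpw u 0 x = x.
Proof. reflexivity. Qed.
Lemma zpw_succ u m x : G u -> zpw u (m + 1) x = u (zpw u m x).
Proof.
  intro Gu. unfold zpw.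
  destruct (Z.le_gt_cases 0 m).
  - replace (0 <=? m + 1)%Z with true by (symmetry; apply Z.leb_le; lia).
    replace (0 <=? m)%Z with true by (symmetry; apply Z.leb_le; lia).
    replace (Z.to_nat (m + 1)) with (S (Z.to_nat m)) by lia. reflexivity.
  - replace (0 <=? m)%Z with false by (symmetry; apply Z.leb_gt; lia).
    destruct (Z.eq_dec m (-1)) as [->|Hm].
    + simpl. rewrite ginv_r; auto.
    + replace (0 <=? m + 1)%Z with false by (symmetry; apply Z.leb_gt; lia).
      replace (Z.to_nat (- m)) with (S (Z.to_nat (- (m + 1)))) by lia. simpl.
      rewrite ginv_r; auto.
Qed.
Lemma zpw_pred u m x : G u -> zpw u (m - 1) x = ginv u (zpw u m x).
Proof.
  intro Gu. replace m with ((m - 1) + 1)%Z at 2 by lia. rewrite zpw_succ; auto.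
  rewrite ginv_l; auto.
Qed.
Lemma zpw_add u m m' x : G u -> zpw u (m + m') x = zpw u m (zpw u m' x).
Proof.
  intro Gu. revert x. induction m using Z.peano_ind; intro x.
  - simpl. auto.
  - replace (Z.succ m + m')%Z with ((m + m') + 1)%Z by lia.
    rewrite zpw_succ, IHm; auto. rewrite <- Z.add_1_r, zpw_succ; auto.
  - replace (Z.pred m + m')%Z with ((m + m') - 1)%Z by lia.
    rewrite zpw_pred, IHm; auto. rewrite <- Z.sub_1_r, zpw_pred; auto.
Qed.
Lemma pw_zpw u m k : G u -> pw (zpw u m) k = zpw u (m * Z.of_nat k).
Proof.
  intro Gu. apply functional_extensionality. intro x. induction k; simpl.
  - rewrite Z.mul_0_r. auto.
  - rewrite IHk. replace (m * Z.pos (Pos.of_succ_nat k))%Z with (m + m * Z.of_nat k)%Z by lia.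
    rewrite zpw_add; auto.
Qed.
Lemma zpw_opp u m x : G u -> zpw u (- m) (zpw u m x) = x.
Proof. intro Gu. rewrite <- zpw_add; auto. replace (- m + m)%Z with 0%Z by lia. auto. Qed.
Lemma zpw_mono u m m' : H u -> pos u -> (m < m')%Z -> ltf (zpw u m) (zpw u m').
Proof.
  intros Hu Pu Hm x Hx. replace m' with (m + (m' - m))%Z by lia.
  rewrite zpw_add; [|apply H_G; auto].
  apply (G_lt (zpw u m)); [apply H_G, H_zpw; auto|].
  replace (m' - m)%Z with (Z.of_nat (Z.to_nat (m' - m))) by lia. rewrite zpw_nat.
  apply pw_pos; auto. lia.
Qed.
Lemma zpw_mono_le u m m' : H u -> pos u -> (m <= m')%Z -> forall x, Ib x -> zpw u m x <= zpw u m' x.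
Proof.
  intros Hu Pu Hm x Hx. destruct (Z.eq_dec m m') as [->|]; [lra|].
  left. apply zpw_mono; auto. lia.
Qed.

Lemma arch u x y : H u -> pos u -> Ib x -> Ib y -> exists n, y < pw u n x.
Proof.
  intros Hu Pu Hx Hy. apply NNPP. intro Hn.
  assert (Hb : forall n, pw u n x <= y).
  { intro n. destruct (Rle_or_lt (pw u n x) y); auto. exfalso; apply Hn; eauto. }
  set (E := fun z => exists n, z = pw u n x).
  destruct (completeness E) as [L [Hub Hlub]].
  { exists y. intros z [n ->]. auto. }
  { exists x. exists O. auto. }
  assert (HxL : x <= L) by (apply Hub; exists O; auto).
  assert (HLy : L <= y) by (apply Hlub; intros z [n ->]; auto).
  assert (IL : Ib L) by (unfold Ib in *; lra).
  pose proof (Pu L IL) as HL.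
  pose proof (G_cont u (H_G u Hu)) as Hc.
  destruct (cont_eps u Hc L (u L - L) ltac:(lra)) as [d [Hd Hd']].
  destruct (classic (exists n, L - d < pw u n x)) as [[n Hn']|Hno].
  - assert (pw u n x <= L) by (apply Hub; exists n; auto).
    specialize (Hd' (pw u n x) ltac:(rewrite Rabs_left1; lra)).
    assert (pw u (S n) x <= L) by (apply Hub; exists (S n); auto).
    simpl in H1. rewrite Rabs_left1 in Hd'; [lra|].
    assert (u (pw u n x) <= u L) by (apply G_le; auto; apply H_G; auto). lra.
  - assert (L <= L - d); [|lra]. apply Hlub. intros z [n ->].
    destruct (Rle_or_lt (pw u n x) (L - d)); auto. exfalso; apply Hno; eauto.
Qed.

Lemma arch_z u x y : H u -> pos u -> Ib x -> Ib y -> exists m, y < zpw u m x.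
Proof.
  intros. destruct (arch u x y) as [n Hn]; auto. exists (Z.of_nat n). rewrite zpw_nat; auto.
Qed.
Lemma arch_z_down u x y : H u -> pos u -> Ib x -> Ib y -> exists m, zpw u m x < y.
Proof.
  intros Hu Pu Hx Hy. destruct (arch u y x) as [n Hn]; auto.
  exists (- Z.of_nat n)%Z. pose proof (H_G u Hu) as Gu.
  apply (G_lt (zpw u (Z.of_nat n))); [apply H_G, H_zpw; auto|].
  rewrite <- zpw_add; auto. replace (Z.of_nat n + - Z.of_nat n)%Z with 0%Z by lia.
  rewrite zpw_nat. auto.
Qed.

Lemma discrete_ivt (P : Z -> Prop) lo hi : P lo -> ~ P hi -> (lo < hi)%Z ->
  exists n, (lo <= n < hi)%Z /\ P n /\ ~ P (n + 1)%Z.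
Proof.
  intros Plo Phi Hlt.
  assert (Hg : forall k : nat, forall l, P l -> ~ P (l + Z.of_nat k)%Z ->
     exists n, (l <= n < l + Z.of_nat k)%Z /\ P n /\ ~ P (n + 1)%Z).
  { induction k; intros l Pl Nl.
    - exfalso. apply Nl. replace (l + Z.of_nat 0)%Z with l by lia. auto.
    - destruct (classic (P (l + 1)%Z)) as [P1|N1].
      + destruct (IHk (l + 1)%Z P1) as [n [Hn1 Hn2]].
        { replace (l + 1 + Z.of_nat k)%Z with (l + Z.of_nat (S k))%Z by lia. auto. }
        exists n. split; [lia|auto].
      + exists l. split; [lia|auto]. }
  destruct (Hg (Z.to_nat (hi - lo)) lo Plo) as [n [Hn1 Hn2]].
  { replace (lo + Z.of_nat (Z.to_nat (hi - lo)))%Z with hi by lia. auto. }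
  exists n. split; [lia|auto].
Qed.

Lemma lef_ext u u' v v' : (forall x, u x = u' x) -> (forall x, v x = v' x) -> lef u v -> lef u' v'.
Proof. intros E1 E2 [p [Hp L]]. exists p. rewrite <- E1, <- E2. auto. Qed.
Lemma ltf_ext u u' v v' : (forall x, u x = u' x) -> (forall x, v x = v' x) -> ltf u v -> ltf u' v'.
Proof. intros E1 E2 L x Hx. rewrite <- E1, <- E2. auto. Qed.
Lemma eqf_ext u u' v v' : (forall x, u x = u' x) -> (forall x, v x = v' x) -> eqf u v -> eqf u' v'.
Proof. intros E1 E2 [p [Hp L]]. exists p. rewrite <- E1, <- E2. auto. Qed.
Lemma H_ext u u' : (forall x, u x = u' x) -> H u -> H u'.
Proof.
  intros E Hu. replace u' with u; auto. apply functional_extensionality; auto.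
Qed.

Lemma neg_inv_pos g : H g -> neg g -> pos (ginv g).
Proof.
  intros Hg N x Hx. assert (Ib (ginv g x)) by (apply H_I; auto; apply H_inv; auto).
  specialize (N _ H0). rewrite ginv_r in N; auto. apply H_G; auto.
Qed.
Lemma pos_inv_neg g : H g -> pos g -> neg (ginv g).
Proof.
  intros Hg N x Hx. assert (Ib (ginv g x)) by (apply H_I; auto; apply H_inv; auto).
  specialize (N _ H0). rewrite ginv_r in N; auto. apply H_G; auto.
Qed.

Lemma exists_pos : exists f, H f /\ pos f.
Proof.
  destruct Hab as [f0 [Gf [_ [_ [_ [Ha [Hb Hno]]]]]]].
  assert (Hf : H f0) by (apply fix_H; auto).
  destruct (trich f0 Hf) as [[p [Hp E]]|[P|N]].
  - exfalso. apply (Hno p); auto.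
  - exists f0; auto.
  - exists (ginv f0). split; [apply H_inv; auto| apply neg_inv_pos; auto].
Qed.

Lemma lef_not u v : H u -> H v -> ~ lef u v -> ltf v u.
Proof.
  intros Hu Hv N. destruct (O1 v u Hv Hu) as [L|[E|L]]; auto; exfalso; apply N.
  - apply eqf_lef, eqf_sym; auto.
  - apply ltf_lef; auto.
Qed.

Lemma bracket u g : H u -> pos u -> H g -> exists n, lef (zpw u n) g /\ ltf g (zpw u (n + 1)).
Proof.
  intros Hu Pu Hg. pose proof Ib_ne as I0. set (x0 := (a+b)/2) in *.
  assert (Ig : Ib (g x0)) by (apply H_I; auto).
  destruct (arch_z_down u x0 (g x0)) as [lo Hlo]; auto.
  destruct (arch_z u x0 (g x0)) as [m Hm]; auto.
  assert (Lm : ltf g (zpw u (m + 1))).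
  { apply (O3 _ (zpw u m)); try apply H_zpw; auto.
    - exists x0. split; auto. lra.
    - apply zpw_mono; auto. lia. }
  set (P := fun n => lef (zpw u n) g).
  assert (Plo : P lo) by (exists x0; split; auto; lra).
  assert (Nhi : ~ P (m + 1)%Z) by (intro L; apply (lef_ltf _ _ L Lm)).
  assert (lo < m + 1)%Z.
  { destruct (Z.lt_ge_cases lo (m + 1)); auto. exfalso. apply Nhi.
    apply (lef_trans _ (zpw u lo)); try apply H_zpw; auto.
    exists x0. split; auto. apply zpw_mono_le; auto. }
  destruct (discrete_ivt P lo (m + 1)%Z Plo Nhi H0) as [n [_ [Pn Nn]]].
  exists n. split; auto. apply lef_not; auto. apply H_zpw; auto.
Qed.

Definition caseA := exists e, H e /\ pos e /\ forall p, H p -> pos p -> lef e p.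

Lemma caseA_repr e g : H e -> pos e -> (forall p, H p -> pos p -> lef e p) -> H g ->
  exists n, eqf g (zpw e n).
Proof.
  intros He Pe Le Hg. pose proof (H_G e He) as Ge.
  destruct (bracket e g He Pe Hg) as [n [L1 L2]]. exists n.
  set (z := zpw e n). assert (Hz : H z) by (apply H_zpw; auto).
  pose proof (H_G z Hz) as Gz.
  set (r := fun x => ginv z (g x)).
  assert (Hr : H r) by (unfold r; apply H_comp; auto; apply H_inv; auto).
  assert (R1 : lef (fun x => x) r).
  { apply (lef_ext (fun x => ginv z (z x)) (fun x => x) (fun x => ginv z (g x)) r);
      [intro; apply ginv_l; auto| reflexivity|].
    apply lef_compl; auto. apply G_inv; auto. }
  assert (R2 : ltf r e).
  { apply (ltf_ext r r (fun x => ginv z (zpw e (n + 1) x)) e); [reflexivity| |].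
    - intro x. rewrite zpw_add; auto. change (zpw e 1 x) with (e x).
      fold z. apply ginv_l; auto.
    - unfold r; apply ltf_compl; auto. apply G_inv; auto. }
  destruct (trich r Hr) as [[p [Hp E]]|[P|N]].
  - exists p. split; auto. unfold r in E. apply (f_equal z) in E. rewrite ginv_r in E; auto.
  - exfalso. apply (lef_ltf e r); auto.
  - exfalso. apply (lef_ltf _ _ R1). intros x Hx. apply N; auto.
Qed.

Lemma halving p : ~ caseA -> H p -> pos p -> exists q, H q /\ pos q /\ lef (fun x => q (q x)) p.
Proof.
  intros NA Hp Pp.
  assert (exists r, H r /\ pos r /\ ~ lef p r) as [r [Hr [Pr Nr]]].
  { apply NNPP. intro N. apply NA. exists p. split; auto. split; auto.
    intros r Hr Pr. apply NNPP. intro N'. apply N. exists r. auto. }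
  apply lef_not in Nr; auto.
  pose proof (H_G r Hr) as Gr.
  set (s := fun x => ginv r (p x)).
  assert (Hs : H s) by (unfold s; apply H_comp; auto; apply H_inv; auto).
  assert (Ps : pos s).
  { intros x Hx. unfold s. apply (G_lt r); auto. rewrite ginv_r; auto. }
  assert (Ers : forall x, r (s x) = p x) by (intro; unfold s; apply ginv_r; auto).
  destruct (O1 r s Hr Hs) as [L|[E|L]].
  - exists r. split; auto. split; auto.
    apply (lef_ext (fun x => r (r x)) (fun x => r (r x)) (fun x => r (s x)) p); [reflexivity| auto|].
    apply lef_compl; auto. apply ltf_lef; auto.
  - exists r. split; auto. split; auto.
    apply (lef_ext (fun x => r (r x)) (fun x => r (r x)) (fun x => r (s x)) p); [reflexivity| auto|].
    apply lef_compl; auto. apply eqf_lef; auto.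
  - exists s. split; auto. split; auto.
    apply (lef_ext (fun x => s (s x)) (fun x => s (s x)) (fun x => r (s x)) p); [reflexivity| auto|].
    apply ltf_lef. apply ltf_compr; auto.
Qed.

Lemma comm_side g h : ~ caseA -> H g -> H h ->
  ltf (fun x => h (g x)) (fun x => g (h x)) -> False.
Proof.
  intros NA Hg Hh L.
  set (hg := fun x => h (g x)). set (gh := fun x => g (h x)).
  assert (Hhg : H hg) by (unfold hg; apply H_comp; auto).
  assert (Hgh : H gh) by (unfold gh; apply H_comp; auto).
  pose proof (H_G hg Hhg) as Ghg.
  set (p := fun x => ginv hg (gh x)).
  assert (Hp : H p) by (unfold p; apply H_comp; auto; apply H_inv; auto).
  assert (Pp : pos p).
  { intros x Hx. unfold p. apply (G_lt hg); auto. rewrite ginv_r; auto. apply L; auto. }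
  destruct (halving p NA Hp Pp) as [q [Hq [Pq Lq]]].
  pose proof (H_G q Hq) as Gq.
  destruct (bracket q g Hq Pq Hg) as [n [Ln Un]].
  destruct (bracket q h Hq Pq Hh) as [m [Lm Um]].
  assert (A1 : lef (fun x => zpw q m (zpw q n x)) hg).
  { unfold hg. apply lef_mul; auto; apply H_zpw; auto. }
  assert (A2 : lef (fun x => zpw q m (zpw q n (q (q x)))) (fun x => hg (q (q x)))).
  { apply (lef_compr (fun x => q (q x)) (fun x => zpw q m (zpw q n x)) hg); auto.
    apply H_comp; auto. }
  assert (A3 : lef (fun x => hg (q (q x))) gh).
  { apply (lef_ext (fun x => hg (q (q x))) _ (fun x => hg (p x))); [reflexivity| |].
    - intro x. unfold p. apply ginv_r; auto.
    - apply lef_compl; auto. }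
  assert (A4 : ltf gh (fun x => zpw q (n + 1) (zpw q (m + 1) x))).
  { unfold gh. apply ltf_mul; auto; apply H_zpw; auto. }
  assert (E1 : forall x, zpw q m (zpw q n (q (q x))) = zpw q (m + n + 2) x).
  { intro x. rewrite !zpw_add by auto. reflexivity. }
  assert (E2 : forall x, zpw q (n + 1) (zpw q (m + 1) x) = zpw q (m + n + 2) x).
  { intro x. rewrite <- zpw_add; auto. f_equal. lia. }
  assert (Hz : H (zpw q (m + n + 2))) by (apply H_zpw; auto).
  assert (B1 : lef (zpw q (m + n + 2)) gh).
  { apply (lef_trans _ (fun x => hg (q (q x)))); auto.
    - apply H_comp; auto. apply H_comp; auto.
    - apply (lef_ext _ _ _ _ E1 (fun x => eq_refl)); auto. }
  apply (lef_ltf _ _ B1). apply (ltf_ext _ _ _ _ (fun x => eq_refl) E2 A4).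
Qed.

Lemma comm g h : H g -> H h -> eqf (fun x => g (h x)) (fun x => h (g x)).
Proof.
  intros Hg Hh. destruct (classic caseA) as [[e [He [Pe Le]]]|NA].
  - pose proof (H_G e He) as Ge.
    destruct (caseA_repr e g He Pe Le Hg) as [n En].
    destruct (caseA_repr e h He Pe Le Hh) as [m Em].
    assert (Hgh : H (fun x => g (h x))) by (apply H_comp; auto).
    assert (Hhg : H (fun x => h (g x))) by (apply H_comp; auto).
    assert (Hz : H (zpw e (n + m))) by (apply H_zpw; auto).
    apply (eqf_trans _ (zpw e (n + m))); auto.
    + apply (eqf_ext _ _ _ _ (fun x => eq_refl) (fun x => eq_sym (zpw_add e n m x Ge))).
      apply eqf_mul; auto; apply H_zpw; auto.
    + rewrite Z.add_comm. apply eqf_sym.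
      apply (eqf_ext _ _ _ _ (fun x => eq_refl) (fun x => eq_sym (zpw_add e m n x Ge))).
      apply eqf_mul; auto; apply H_zpw; auto.
  - destruct (O1 (fun x => g (h x)) (fun x => h (g x))) as [L|[E|L]]; try (apply H_comp; auto); auto.
    + exfalso. apply (comm_side h g NA Hh Hg L).
    + exfalso. apply (comm_side g h NA Hg Hh L).
Qed.

Definition fp : R -> R := epsilon (inhabits (fun x : R => x)) (fun f => H f /\ pos f).
Lemma fp_spec : H fp /\ pos fp.
Proof. unfold fp. apply epsilon_spec. apply exists_pos. Qed.
Lemma H_fp : H fp. Proof. apply fp_spec. Qed.
Lemma pos_fp : pos fp. Proof. apply fp_spec. Qed.
Lemma G_fp : G fp. Proof. apply H_G, H_fp. Qed.
#[local] Hint Resolve H_fp pos_fp G_fp : core.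
Ltac solveH := repeat (first [assumption | apply H_fp | apply H_id | apply H_pw | apply H_zpw | apply H_inv | apply H_comp]).

Lemma pow_ltf u v k : H u -> H v -> ltf u v -> (k > 0)%nat -> ltf (pw u k) (pw v k).
Proof.
  intros Hu Hv L Hk. induction k; [lia|]. destruct (Nat.eq_dec k 0) as [->|Hk0].
  - simpl. intros x Hx. apply L; auto.
  - change (ltf (fun x => u (pw u k x)) (fun x => v (pw v k x))).
    apply ltf_mul; auto. apply H_pw; auto. apply IHk; lia.
Qed.
Lemma pow_eqf u v k : H u -> H v -> eqf u v -> eqf (pw u k) (pw v k).
Proof.
  intros Hu Hv L. induction k; [apply eqf_refl|]. simpl.
  apply (eqf_mul u v (pw u k) (pw v k)); auto; apply H_pw; auto.
Qed.

Lemma scale_lef g m n k : H g -> (k > 0)%nat ->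
  (lef (zpw fp m) (pw g n) <-> lef (zpw fp (m * Z.of_nat k)) (pw g (n * k))).
Proof.
  intros Hg Hk. pose proof H_fp. pose proof G_fp.
  assert (Hz : H (zpw fp m)) by (apply H_zpw; auto).
  assert (Hp : H (pw g n)) by (apply H_pw; auto).
  rewrite <- pw_zpw, <- pw_mul; auto. split; intro L.
  - destruct (O1 (zpw fp m) (pw g n)) as [L'|[E|L']]; auto.
    + apply ltf_lef, pow_ltf; auto.
    + apply eqf_lef, pow_eqf; auto.
    + exfalso; apply (lef_ltf _ _ L L').
  - apply nltf_lef; auto. intro L'. apply (lef_ltf _ _ L). apply pow_ltf; auto.
Qed.

Lemma frac_lt m n m' n' : (n > 0)%nat -> (n' > 0)%nat ->
  (m' * Z.of_nat n < m * Z.of_nat n')%Z -> IZR m' / INR n' < IZR m / INR n.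
Proof.
  intros Hn Hn' Hz. apply IZR_lt in Hz. rewrite !mult_IZR, <- !INR_IZR_INZ in Hz.
  assert (0 < INR n) by (apply lt_0_INR; lia).
  assert (0 < INR n') by (apply lt_0_INR; lia).
  apply (Rmult_lt_reg_r (INR n * INR n')). nra.
  replace (IZR m' / INR n' * (INR n * INR n')) with (IZR m' * INR n) by (field; lra).
  replace (IZR m / INR n * (INR n * INR n')) with (IZR m * INR n') by (field; lra). lra.
Qed.

Lemma zpw_lt_inv u m m' : H u -> pos u -> ltf (zpw u m) (zpw u m') -> (m < m')%Z.
Proof.
  intros Hu Pu L. destruct (Z.lt_ge_cases m m'); auto. exfalso.
  pose proof Ib_ne. specialize (L _ H1).
  pose proof (zpw_mono_le u m' m Hu Pu H0 _ H1). lra.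
Qed.

Definition Lset g r := exists (m : Z) (n : nat), (n > 0)%nat /\ r = IZR m / INR n /\ lef (zpw fp m) (pw g n).

Lemma Lset_upper g m n : H g -> (n > 0)%nat -> ltf (pw g n) (zpw fp m) ->
  forall r, Lset g r -> r < IZR m / INR n.
Proof.
  intros Hg Hn L r [m' [n' [Hn' [-> L']]]].
  pose proof H_fp. pose proof G_fp.
  apply (scale_lef g m' n' n Hg Hn) in L'.
  assert (L2 : ltf (pw g (n' * n)) (zpw fp (m * Z.of_nat n'))).
  { rewrite <- pw_zpw; auto. replace (n' * n)%nat with (n * n')%nat by lia.
    rewrite <- pw_mul. apply pow_ltf; auto; try apply H_pw; try apply H_zpw; auto. }
  apply frac_lt; auto. apply (zpw_lt_inv fp); auto.
  apply (O3 _ (pw g (n' * n))); auto; try apply H_pw; try apply H_zpw; auto.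
Qed.

Definition tau (g : R -> R) : R := epsilon (inhabits 0) (fun t => is_lub (Lset g) t).

Lemma tau_spec g : H g -> is_lub (Lset g) (tau g).
Proof.
  intro Hg. unfold tau. apply epsilon_spec. pose proof H_fp. pose proof pos_fp.
  destruct (bracket fp g H0 H1 Hg) as [n [L1 L2]].
  destruct (completeness (Lset g)) as [t Ht].
  - exists (IZR (n + 1) / INR 1). intros r Hr. left.
    apply (Lset_upper g (n + 1) 1); auto.
  - exists (IZR n / INR 1). exists n, 1%nat. split; auto.
  - exists t; auto.
Qed.

Lemma tau_lower g m n : H g -> (n > 0)%nat -> lef (zpw fp m) (pw g n) -> IZR m / INR n <= tau g.
Proof. intros Hg Hn L. apply (tau_spec g Hg). exists m, n. auto. Qed.
Lemma tau_upper g m n : H g -> (n > 0)%nat -> ltf (pw g n) (zpw fp m) -> tau g <= IZR m / INR n.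
Proof.
  intros Hg Hn L. apply (tau_spec g Hg). intros r Hr. left. apply (Lset_upper g m n); auto.
Qed.
Lemma tau_approx_lo g m n : H g -> (n > 0)%nat -> IZR m / INR n < tau g -> lef (zpw fp m) (pw g n).
Proof.
  intros Hg Hn L. apply NNPP. intro N. apply lef_not in N; try apply H_zpw; try apply H_pw;
  try apply H_fp; auto. pose proof (tau_upper g m n Hg Hn N). lra.
Qed.
Lemma tau_approx_hi g m n : H g -> (n > 0)%nat -> tau g < IZR m / INR n -> ltf (pw g n) (zpw fp m).
Proof.
  intros Hg Hn L. apply NNPP. intro N. apply nltf_lef in N; try apply H_zpw; try apply H_pw;
  try apply H_fp; auto. pose proof (tau_lower g m n Hg Hn N). lra.
Qed.

Lemma rat_below t n : (n > 0)%nat -> exists m, t - 2 / INR n < IZR m / INR n < t.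
Proof.
  intro Hn. assert (0 < INR n) by (apply lt_0_INR; lia).
  destruct (archimed (INR n * t)) as [A B]. exists (up (INR n * t) - 2)%Z.
  rewrite minus_IZR. split.
  - apply (Rmult_lt_reg_r (INR n)); auto.
    replace ((t - 2 / INR n) * INR n) with (INR n * t - 2) by (field; lra).
    replace ((IZR (up (INR n * t)) - 2) / INR n * INR n) with (IZR (up (INR n * t)) - 2) by (field; lra).
    lra.
  - apply (Rmult_lt_reg_r (INR n)); auto.
    replace ((IZR (up (INR n * t)) - 2) / INR n * INR n) with (IZR (up (INR n * t)) - 2) by (field; lra).
    lra.
Qed.
Lemma rat_above t n : (n > 0)%nat -> exists m, t < IZR m / INR n < t + 2 / INR n.
Proof.
  intro Hn. assert (0 < INR n) by (apply lt_0_INR; lia).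
  destruct (archimed (INR n * t)) as [A B]. exists (up (INR n * t))%Z.
  split.
  - apply (Rmult_lt_reg_r (INR n)); auto.
    replace (IZR (up (INR n * t)) / INR n * INR n) with (IZR (up (INR n * t))) by (field; lra).
    lra.
  - apply (Rmult_lt_reg_r (INR n)); auto.
    replace ((t + 2 / INR n) * INR n) with (INR n * t + 2) by (field; lra).
    replace (IZR (up (INR n * t)) / INR n * INR n) with (IZR (up (INR n * t))) by (field; lra).
    lra.
Qed.
Lemma big_n eps : eps > 0 -> exists n, (n > 0)%nat /\ 4 / INR n < eps.
Proof.
  intro He. destruct (archimed (4 / eps)) as [A _].
  assert (0 < 4 / eps) by (apply Rdiv_lt_0_compat; lra).
  exists (Z.to_nat (up (4 / eps))). assert (0 < IZR (up (4 / eps))) by lra.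
  apply lt_0_IZR in H1. split; [lia|].
  rewrite INR_IZR_INZ. replace (Z.of_nat (Z.to_nat (up (4 / eps)))) with (up (4 / eps)) by lia.
  apply (Rmult_lt_reg_r (IZR (up (4 / eps)))); [lra|].
  replace (4 / IZR (up (4 / eps)) * IZR (up (4 / eps))) with 4 by (field; lra).
  apply (Rmult_lt_reg_l (/ eps)); [apply Rinv_0_lt_compat; lra|].
  replace (/ eps * 4) with (4 / eps) by (unfold Rdiv; ring).
  replace (/ eps * (eps * IZR (up (4 / eps)))) with (IZR (up (4 / eps))) by (field; lra). lra.
Qed.

Lemma pw_comm g h n : H g -> H h ->
  eqf (pw (fun x => g (h x)) n) (fun x => pw g n (pw h n x)).
Proof.
  intros Hg Hh. induction n; [apply eqf_refl|].
  assert (Hgh : H (fun x => g (h x))) by (apply H_comp; auto).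
  pose proof (H_pw g n Hg). pose proof (H_pw h n Hh).
  simpl. apply (eqf_trans _ (fun x => g (h (pw g n (pw h n x))))); try solveH.
  - apply (eqf_compl (fun x => g (h x))); auto.
  - apply eqf_compl. apply (eqf_compr (pw h n) (fun x => h (pw g n x)) (fun x => pw g n (h x))); auto.
    apply comm; auto.
Qed.

Lemma tau_add g h : H g -> H h -> tau (fun x => g (h x)) = tau g + tau h.
Proof.
  intros Hg Hh. pose proof H_fp as Hf. pose proof G_fp as Gf.
  assert (Hgh : H (fun x => g (h x))) by (apply H_comp; auto).
  destruct (Rtotal_order (tau (fun x => g (h x))) (tau g + tau h)) as [Hlt|[Heq|Hgt]]; auto; exfalso.
  - destruct (big_n (tau g + tau h - tau (fun x => g (h x)))) as [n [Hn Hn4]]; [lra|].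
    destruct (rat_below (tau g) n Hn) as [m1 [A1 B1]].
    destruct (rat_below (tau h) n Hn) as [m2 [A2 B2]].
    pose proof (tau_approx_lo g m1 n Hg Hn B1) as L1.
    pose proof (tau_approx_lo h m2 n Hh Hn B2) as L2.
    assert (L3 : lef (zpw fp (m1 + m2)) (pw (fun x => g (h x)) n)).
    { apply (lef_trans _ (fun x => pw g n (pw h n x))); try apply H_zpw; try apply H_pw; auto.
      - apply H_comp; apply H_pw; auto.
      - apply (lef_ext (fun x => zpw fp m1 (zpw fp m2 x)) _ (fun x => pw g n (pw h n x)) _);
          [intro; rewrite zpw_add; auto| reflexivity|].
        apply lef_mul; try apply H_zpw; try apply H_pw; auto.
      - apply eqf_lef, eqf_sym, pw_comm; auto. }
    pose proof (tau_lower _ _ _ Hgh Hn L3).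
    assert (IZR (m1 + m2) / INR n = IZR m1 / INR n + IZR m2 / INR n).
    { rewrite plus_IZR. unfold Rdiv. ring. }
    assert (2 / INR n + 2 / INR n = 4 / INR n) by (unfold Rdiv; ring). lra.
  - destruct (big_n (tau (fun x => g (h x)) - (tau g + tau h))) as [n [Hn Hn4]]; [lra|].
    destruct (rat_above (tau g) n Hn) as [m1 [A1 B1]].
    destruct (rat_above (tau h) n Hn) as [m2 [A2 B2]].
    pose proof (tau_approx_hi g m1 n Hg Hn A1) as L1.
    pose proof (tau_approx_hi h m2 n Hh Hn A2) as L2.
    assert (L3 : ltf (pw (fun x => g (h x)) n) (zpw fp (m1 + m2))).
    { apply (O3 _ (fun x => pw g n (pw h n x))); try apply H_zpw; try apply H_pw; auto.
      - apply H_comp; apply H_pw; auto.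
      - apply eqf_lef, pw_comm; auto.
      - apply (ltf_ext (fun x => pw g n (pw h n x)) _ (fun x => zpw fp m1 (zpw fp m2 x)) _);
          [reflexivity| intro; rewrite zpw_add; auto|].
        apply ltf_mul; try apply H_zpw; try apply H_pw; auto. }
    pose proof (tau_upper _ _ _ Hgh Hn L3).
    assert (IZR (m1 + m2) / INR n = IZR m1 / INR n + IZR m2 / INR n).
    { rewrite plus_IZR. unfold Rdiv. ring. }
    assert (2 / INR n + 2 / INR n = 4 / INR n) by (unfold Rdiv; ring). lra.
Qed.

Lemma lef_pw_id g n : H g -> lef g (fun x => x) -> lef (pw g n) (fun x => x).
Proof.
  intros Hg L. induction n; [apply eqf_lef, eqf_refl|].
  change (lef (fun x => g (pw g n x)) (fun x => (fun x => x) ((fun x => x) x))).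
  apply lef_mul; try solveH; auto.
Qed.

Lemma tau_pos g : H g -> (0 < tau g <-> pos g).
Proof.
  intro Hg. split; intro P.
  - destruct (big_n (tau g)) as [n [Hn Hn4]]; auto.
    destruct (rat_below (tau g) n Hn) as [m [A B]].
    assert (0 < IZR m / INR n).
    { assert (2 / INR n < 4 / INR n). { assert (0 < INR n) by (apply lt_0_INR; lia).
        unfold Rdiv. apply Rmult_lt_compat_r; [apply Rinv_0_lt_compat|]; lra. } lra. }
    assert (0 < IZR m).
    { assert (0 < INR n) by (apply lt_0_INR; lia).
      replace (IZR m) with (IZR m / INR n * INR n) by (field; lra). nra. }
    apply lt_0_IZR in H1.
    pose proof (tau_approx_lo g m n Hg Hn B) as L.
    assert (L2 : ltf (fun x => x) (pw g n)).
    { apply (O4 _ (zpw fp m)); try solveH; auto.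
      apply (ltf_ext (zpw fp 0) _ (zpw fp m) _ (fun x => eq_refl) (fun x => eq_refl)).
      apply zpw_mono; auto. }
    apply NNPP. intro NP.
    assert (Lg : lef g (fun x => x)).
    { destruct (trich g Hg) as [[p [Hp E]]|[P'|N]]; [exists p; split; auto; lra| contradiction|].
      exists ((a+b)/2). split; [apply Ib_ne|]. left. apply N, Ib_ne. }
    apply (lef_ltf _ _ (lef_pw_id g n Hg Lg) L2).
  - pose proof Ib_ne as I0. set (x0 := (a+b)/2) in *.
    destruct (arch g x0 (fp x0)) as [N HN]; auto. apply H_I; auto.
    assert (HN0 : (N > 0)%nat).
    { destruct N; [|lia]. simpl in HN. pose proof (pos_fp x0 I0). lra. }
    assert (L : lef (zpw fp 1) (pw g N)).
    { exists x0. split; auto. change (zpw fp 1 x0) with (fp x0). lra. }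
    pose proof (tau_lower g 1 N Hg HN0 L).
    assert (0 < IZR 1 / INR N). { apply Rdiv_lt_0_compat; [lra| apply lt_0_INR; lia]. }
    lra.
Qed.

Lemma tau_kerp g : H g -> (tau g = 0 <-> kerp g).
Proof.
  intro Hg. pose proof (tau_pos g Hg) as TP.
  assert (TI : tau (ginv g) = - tau g).
  { pose proof (tau_add g (ginv g) Hg (H_inv g Hg)).
    replace (fun x => g (ginv g x)) with (fun x : R => x) in H0
      by (apply functional_extensionality; intro; rewrite ginv_r; auto; apply H_G; auto).
    pose proof (tau_add (fun x => x) (fun x => x) H_id H_id). simpl in H1. lra. }
  pose proof (tau_pos (ginv g) (H_inv g Hg)) as TP'.
  split; intro E.
  - destruct (trich g Hg) as [K|[P|N]]; auto; exfalso.
    + apply TP in P. lra.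
    + apply neg_inv_pos in N; auto. apply TP' in N. lra.
  - destruct (Rtotal_order (tau g) 0) as [L|[L|L]]; auto; exfalso.
    + assert (pos (ginv g)) by (apply TP'; lra).
      destruct E as [p [Hp Ep]]. assert (Ib (g p)) by (rewrite Ep; auto).
      specialize (H0 _ H1). rewrite ginv_l in H0; [lra|apply H_G; auto].
    + apply TP in L. destruct E as [p [Hp Ep]]. specialize (L p Hp). lra.
Qed.

Lemma tau_is_tau : is_tau G a b tau.
Proof.
  split; [|split].
  - intros g h Hg Hh. apply tau_add; auto.
  - intros g Hg. apply tau_kerp; auto.
  - intros g Hg. rewrite (tau_pos g Hg). unfold pos, Ib. split; intros P x Hx; specialize (P x Hx); lra.
Qed.

Lemma ginv_ginv g x : G g -> ginv (ginv g) x = g x.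
Proof.
  intro Gg. rewrite <- (ginv_l g x Gg) at 1. apply ginv_l, G_inv; auto.
Qed.

Section Generic.
Variable T : (R -> R) -> R.
Hypothesis HT : is_tau G a b T.

Lemma T_add g h : H g -> H h -> T (fun x => g (h x)) = T g + T h.
Proof. apply HT. Qed.
Lemma T_pos g : H g -> (0 < T g <-> pos g).
Proof.
  intro Hg. destruct HT as [_ [_ P]]. rewrite (P g Hg). unfold pos, Ib.
  split; intros Q x Hx; specialize (Q x Hx); lra.
Qed.
Lemma T_ker g : H g -> (T g = 0 <-> kerp g).
Proof. intro Hg. destruct HT as [_ [K _]]. apply K; auto. Qed.
Lemma T_ext u v : (forall x, u x = v x) -> T u = T v.
Proof. intro E. f_equal. apply functional_extensionality; auto. Qed.
Lemma T_id : T (fun x => x) = 0.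
Proof. pose proof (T_add (fun x => x) (fun x => x) H_id H_id). simpl in H0. lra. Qed.
Lemma T_inv g : H g -> T (ginv g) = - T g.
Proof.
  intro Hg. pose proof (T_add g (ginv g) Hg (H_inv g Hg)).
  rewrite (T_ext _ (fun x => x)) in H0 by (intro; apply ginv_r, H_G; auto).
  rewrite T_id in H0. lra.
Qed.
Lemma T_neg g : H g -> (T g < 0 <-> neg g).
Proof.
  intro Hg. pose proof (T_inv g Hg). pose proof (T_pos (ginv g) (H_inv g Hg)).
  split; intro P.
  - assert (pos (ginv g)) by (apply H1; lra).
    pose proof (pos_inv_neg (ginv g) (H_inv g Hg) H2).
    intros x Hx. rewrite <- (ginv_ginv g x); [apply H3; auto| apply H_G; auto].
  - apply neg_inv_pos in P; auto. apply H1 in P. lra.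
Qed.
Lemma T_zpw u m : H u -> T (zpw u m) = IZR m * T u.
Proof.
  intro Hu. pose proof (H_G u Hu) as Gu. induction m using Z.peano_ind.
  - rewrite Rmult_0_l, <- T_id. apply T_ext. intro; reflexivity.
  - rewrite (T_ext _ (fun x => u (zpw u m x))) by (intro; unfold Z.succ; apply zpw_succ; auto).
    rewrite T_add, IHm by solveH. rewrite succ_IZR. ring.
  - rewrite (T_ext _ (fun x => ginv u (zpw u m x))) by (intro; rewrite <- Z.sub_1_r; apply zpw_pred; auto).
    rewrite T_add, IHm, T_inv by solveH. unfold Z.pred. rewrite plus_IZR. simpl. ring.
Qed.
Lemma T_pw u n : H u -> T (pw u n) = INR n * T u.
Proof. intro Hu. rewrite <- zpw_nat, T_zpw, INR_IZR_INZ; auto. Qed.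
Lemma T_diff u v : H u -> H v -> T (fun x => ginv u (v x)) = T v - T u.
Proof. intros Hu Hv. rewrite T_add, T_inv by solveH. ring. Qed.
Lemma T_mono u v : H u -> H v -> lef u v -> T u <= T v.
Proof.
  intros Hu Hv [p [Hp L]]. pose proof (T_diff u v Hu Hv).
  destruct (Rle_or_lt (T u) (T v)); auto. exfalso.
  assert (T (fun x => ginv u (v x)) < 0) by lra.
  apply T_neg in H2; [|solveH]. specialize (H2 p Hp). simpl in H2.
  apply (G_lt u) in H2; [|apply H_G; auto]. rewrite ginv_r in H2; [lra|apply H_G; auto].
Qed.
Lemma T_eqf u v : H u -> H v -> eqf u v -> T u = T v.
Proof.
  intros Hu Hv [p [Hp E]]. pose proof (T_diff u v Hu Hv).
  assert (kerp (fun x => ginv u (v x))).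
  { exists p. split; auto. rewrite <- E. apply ginv_l, H_G; auto. }
  apply T_ker in H1; [lra|solveH].
Qed.
End Generic.

Lemma unique_aux T1 T2 g : is_tau G a b T1 -> is_tau G a b T2 -> H g ->
  T1 g / T1 fp <= T2 g / T2 fp.
Proof.
  intros HT1 HT2 Hg.
  assert (P1 : 0 < T1 fp) by (apply (T_pos T1 HT1); auto).
  assert (P2 : 0 < T2 fp) by (apply (T_pos T2 HT2); auto).
  set (s1 := T1 g / T1 fp). set (s2 := T2 g / T2 fp).
  destruct (Rle_or_lt s1 s2) as [|Hlt]; auto. exfalso.
  destruct (big_n (s1 - s2)) as [n [Hn Hn4]]; [lra|].
  destruct (rat_above s2 n Hn) as [m [A B]].
  assert (Hn0 : 0 < INR n) by (apply lt_0_INR; lia).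
  assert (2 / INR n < 4 / INR n) by (unfold Rdiv; apply Rmult_lt_compat_r; [apply Rinv_0_lt_compat|]; lra).
  set (w := fun x => pw g n (zpw fp (- m) x)).
  assert (Hw : H w) by (unfold w; solveH).
  assert (Tw : forall T, is_tau G a b T -> T w = INR n * T g - IZR m * T fp).
  { intros T HT. unfold w. rewrite (T_add T HT), (T_pw T HT), (T_zpw T HT) by solveH.
    rewrite opp_IZR. ring. }
  assert (C1 : IZR m / INR n < s1) by lra.
  assert (0 < T1 w).
  { rewrite (Tw T1 HT1). unfold s1 in C1.
    apply (Rmult_lt_compat_r (INR n * T1 fp)) in C1; [|nra].
    replace (IZR m / INR n * (INR n * T1 fp)) with (IZR m * T1 fp) in C1 by (field; lra).
    replace (T1 g / T1 fp * (INR n * T1 fp)) with (INR n * T1 g) in C1 by (field; lra). lra. }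
  apply (T_pos T1 HT1 w Hw) in H1. apply (T_pos T2 HT2 w Hw) in H1.
  rewrite (Tw T2 HT2) in H1. unfold s2 in A.
  apply (Rmult_lt_compat_r (INR n * T2 fp)) in A; [|nra].
  replace (IZR m / INR n * (INR n * T2 fp)) with (IZR m * T2 fp) in A by (field; lra).
  replace (T2 g / T2 fp * (INR n * T2 fp)) with (INR n * T2 g) in A by (field; lra). lra.
Qed.

Lemma tau_unique tau' : is_tau G a b tau' ->
  exists c, c > 0 /\ forall g, stab G a b g -> tau' g = c * tau g.
Proof.
  intro HT. pose proof tau_is_tau as HT0.
  assert (P1 : 0 < tau fp) by (apply (T_pos tau HT0); auto).
  assert (P2 : 0 < tau' fp) by (apply (T_pos tau' HT); auto).
  exists (tau' fp / tau fp). split; [apply Rdiv_lt_0_compat; auto|].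
  intros g Hg.
  pose proof (unique_aux tau tau' g HT0 HT Hg). pose proof (unique_aux tau' tau g HT HT0 Hg).
  assert (tau' g / tau' fp = tau g / tau fp) by lra.
  apply (f_equal (fun t => t * tau' fp)) in H2.
  replace (tau' g / tau' fp * tau' fp) with (tau' g) in H2 by (field; lra).
  rewrite H2. field. lra.
Qed.

Definition smallest (M : R -> Prop) : Prop :=
  forall N, (exists z, N z) -> rel_closed a b N -> invariant_set (stab G a b) N -> forall y, M y -> N y.

Lemma Lambda_char M : (exists z, M z) -> rel_closed a b M -> invariant_set (stab G a b) M ->
  smallest M -> forall x, Lambda G a b x <-> M x.
Proof.
  intros Ne Cl Inv Sm x. split.
  - intros [M' [[Ne' [Cl' [Inv' Min']]] Hx]].
    apply (Min' M Ne Cl Inv); auto. intros y Hy. apply (Sm M' Ne' Cl' Inv'); auto.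
  - intro Hx. exists M. split; auto. split; auto. split; auto. split; auto.
    intros N NeN ClN InvN Sub y Hy. apply (Sm N NeN ClN InvN); auto.
Qed.

Definition x0 := (a + b) / 2.
Lemma I_x0 : Ib x0. Proof. apply Ib_ne. Qed.
#[local] Hint Resolve I_x0 : core.

Definition PS (x r : R) := exists h, H h /\ h x0 <= x /\ r = tau h.
Definition phi (x : R) : R := epsilon (inhabits 0) (fun t => is_lub (PS x) t).

Lemma phi_spec x : Ib x -> is_lub (PS x) (phi x).
Proof.
  intro Hx. unfold phi. apply epsilon_spec.
  destruct (arch_z fp x0 x) as [m Hm]; auto.
  destruct (arch_z_down fp x0 x) as [m' Hm']; auto.
  destruct (completeness (PS x)) as [t Ht].
  - exists (tau (zpw fp m)). intros r [h [Hh [Le ->]]].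
    apply (T_mono tau tau_is_tau); auto; try solveH. exists x0. split; auto. lra.
  - exists (tau (zpw fp m')). exists (zpw fp m'). split; [solveH|]. split; auto. lra.
  - exists t; auto.
Qed.

Lemma phi_at h : H h -> phi (h x0) = tau h.
Proof.
  intro Hh. pose proof (phi_spec (h x0) (H_I h x0 Hh I_x0)) as [U L]. apply Rle_antisym.
  - apply L. intros r [h' [Hh' [Le ->]]]. apply (T_mono tau tau_is_tau); auto.
    exists x0. split; auto.
  - apply U. exists h. split; auto. split; auto. lra.
Qed.

Lemma phi_mono x y : Ib x -> Ib y -> x <= y -> phi x <= phi y.
Proof.
  intros Hx Hy Le. pose proof (phi_spec x Hx) as [U L]. pose proof (phi_spec y Hy) as [U' L'].
  apply L. intros r [h [Hh [Le' ->]]]. apply U'. exists h. split; auto. split; auto. lra.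
Qed.

Lemma phi_equiv g x : H g -> Ib x -> phi (g x) = phi x + tau g.
Proof.
  intros Hg Hx. pose proof (H_G g Hg) as Gg.
  assert (Igx : Ib (g x)) by (apply H_I; auto).
  pose proof (phi_spec x Hx) as [U L]. pose proof (phi_spec (g x) Igx) as [U' L'].
  apply Rle_antisym.
  - assert (phi (g x) - tau g <= phi x); [|lra].
    cut (phi (g x) <= phi x + tau g); [lra|].
    apply L'. intros r [h [Hh [Le ->]]].
    assert (tau (fun y => ginv g (h y)) <= phi x).
    { apply U. exists (fun y => ginv g (h y)). split; [solveH|]. split; auto.
      apply (G_le g); auto. rewrite ginv_r; auto. }
    rewrite (T_diff tau tau_is_tau g h Hg Hh) in H0. lra.
  - cut (phi x <= phi (g x) - tau g); [lra|].
    apply L. intros r [h [Hh [Le ->]]].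
    assert (tau (fun y => g (h y)) <= phi (g x)).
    { apply U'. exists (fun y => g (h y)). split; [solveH|]. split; auto.
      apply G_le; auto. }
    rewrite tau_add in H0; auto. lra.
Qed.

Lemma phi_lt_inv x y : Ib x -> Ib y -> phi x < phi y -> x < y.
Proof.
  intros Hx Hy L. destruct (Rlt_or_le x y); auto. pose proof (phi_mono y x Hy Hx H0). lra.
Qed.

Section CaseB.
Hypothesis NA : ~ caseA.

Lemma small_pos k : exists q, H q /\ pos q /\ (INR k + 1) * tau q <= tau fp.
Proof.
  induction k.
  - exists fp. split; auto. split; auto. simpl. lra.
  - destruct IHk as [q [Hq [Pq Lq]]].
    destruct (halving q NA Hq Pq) as [q' [Hq' [Pq' L']]].
    exists q'. split; auto. split; auto.
    pose proof (T_mono tau tau_is_tau _ _ (H_comp q' q' Hq' Hq') Hq L').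
    rewrite tau_add in H0; auto.
    pose proof (proj2 (tau_pos q' Hq') Pq'). rewrite S_INR.
    assert (0 <= INR k) by apply pos_INR. nra.
Qed.

Lemma dense t eps : eps > 0 -> exists h, H h /\ Rabs (tau h - t) < eps.
Proof.
  intro He. pose proof (proj2 (tau_pos fp H_fp) pos_fp) as Tf.
  destruct (archimed (tau fp / eps)) as [A _].
  assert (0 < tau fp / eps) by (apply Rdiv_lt_0_compat; lra).
  assert (0 < IZR (up (tau fp / eps))) by lra. apply lt_0_IZR in H1.
  destruct (small_pos (Z.to_nat (up (tau fp / eps)))) as [q [Hq [Pq Lq]]].
  rewrite INR_IZR_INZ in Lq. replace (Z.of_nat (Z.to_nat (up (tau fp / eps)))) with (up (tau fp / eps)) in Lq by lia.
  pose proof (proj2 (tau_pos q Hq) Pq) as Tq.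
  assert (Tq' : tau q < eps).
  { apply (Rmult_lt_reg_l (IZR (up (tau fp / eps)) + 1)); [lra|].
    apply (Rle_lt_trans _ (tau fp)); auto.
    apply (Rmult_lt_reg_r (/ eps)); [apply Rinv_0_lt_compat; lra|].
    replace ((IZR (up (tau fp / eps)) + 1) * eps * / eps) with (IZR (up (tau fp / eps)) + 1) by (field; lra).
    unfold Rdiv in A. lra. }
  set (d := tau q) in *.
  set (s := t / d).
  destruct (archimed s) as [B C].
  exists (zpw q (up s - 1)). split; [solveH|].
  rewrite (T_zpw tau tau_is_tau) by auto. rewrite minus_IZR. fold d.
  assert (E : t = s * d) by (unfold s; field; lra).
  assert (X1 : (IZR (up s) - 1) * d > t - d) by (rewrite E; nra).
  assert (X2 : (IZR (up s) - 1) * d <= t) by (rewrite E; nra).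
  rewrite Rabs_left1; lra.
Qed.

Lemma phi_cont x eps : Ib x -> eps > 0 -> exists delta, delta > 0 /\
  forall y, Ib y -> Rabs (y - x) < delta -> Rabs (phi y - phi x) < eps.
Proof.
  intros Hx He.
  destruct (dense (phi x - eps / 2) (eps / 2)) as [h1 [Hh1 E1]]; [lra|].
  destruct (dense (phi x + eps / 2) (eps / 2)) as [h2 [Hh2 E2]]; [lra|].
  apply Rabs_def2 in E1. apply Rabs_def2 in E2.
  assert (I1 : Ib (h1 x0)) by (apply H_I; auto).
  assert (I2 : Ib (h2 x0)) by (apply H_I; auto).
  assert (L1 : h1 x0 < x).
  { apply phi_lt_inv; auto. rewrite phi_at; auto. lra. }
  assert (L2 : x < h2 x0).
  { apply phi_lt_inv; auto. rewrite phi_at; auto. lra. }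
  exists (Rmin (x - h1 x0) (h2 x0 - x)). split; [apply Rmin_pos; lra|].
  intros y Hy Hd. apply Rabs_def2 in Hd. destruct Hd as [D1 D2].
  pose proof (Rmin_l (x - h1 x0) (h2 x0 - x)). pose proof (Rmin_r (x - h1 x0) (h2 x0 - x)).
  pose proof (phi_mono (h1 x0) y I1 Hy ltac:(lra)).
  pose proof (phi_mono y (h2 x0) Hy I2 ltac:(lra)).
  rewrite phi_at in H2, H3; auto. apply Rabs_def1; lra.
Qed.

Definition TT := tau fp.
Lemma TT_pos : 0 < TT.
Proof. apply tau_pos; auto. Qed.
Lemma phi_x0 : phi x0 = 0.
Proof. pose proof (phi_at (fun x => x) H_id) as E. cbv beta in E. rewrite E. apply (T_id tau tau_is_tau). Qed.
Lemma phi_fx0 : phi (fp x0) = TT.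
Proof. apply phi_at; auto. Qed.
Definition Sy (z : R) := x0 <= z <= fp x0 /\ phi z < TT.
Definition ystar := epsilon (inhabits 0) (fun t => is_lub Sy t).

Lemma ystar_spec : is_lub Sy ystar.
Proof.
  unfold ystar. apply epsilon_spec. destruct (completeness Sy) as [t Ht].
  - exists (fp x0). intros z [Hz _]. lra.
  - exists x0. split; [pose proof (pos_fp x0 I_x0); lra|].
    rewrite phi_x0. apply TT_pos.
  - exists t; auto.
Qed.


Lemma ystar_props : x0 < ystar /\ ystar <= fp x0 /\ Ib ystar /\
  (forall z, x0 <= z < ystar -> phi z < TT) /\ TT <= phi ystar.
Proof.
  destruct ystar_spec as [U L].
  pose proof (pos_fp x0 I_x0) as Pf. pose proof TT_pos as TP.
  pose proof (H_I fp x0 H_fp I_x0) as If. pose proof I_x0 as I0.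
  assert (Hle : ystar <= fp x0) by (apply L; intros z [Hz _]; lra).
  assert (Hge : x0 <= ystar) by (apply U; split; [lra|]; rewrite phi_x0; auto).
  assert (Below : forall z, x0 <= z < ystar -> phi z < TT).
  { intros z Hz. destruct (classic (exists s, Sy s /\ z < s)) as [[s [[Hs1 Hs2] Hs3]]|N].
    - assert (Ib z) by (unfold Ib in *; lra).
      assert (Ib s) by (unfold Ib in *; lra).
      pose proof (phi_mono z s H0 H1 ltac:(lra)). lra.
    - exfalso. assert (ystar <= z); [|lra]. apply L. intros s Hs.
      destruct (Rle_or_lt s z); auto. exfalso; apply N; eauto. }
  assert (Iy : Ib ystar) by (unfold Ib in *; lra).
  assert (Above : TT <= phi ystar).
  { destruct (Rle_or_lt TT (phi ystar)) as [|Hlt]; auto. exfalso.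
    assert (ystar < fp x0) by (destruct (Req_dec ystar (fp x0)) as [E|]; [rewrite E, phi_fx0 in Hlt; lra|lra]).
    destruct (phi_cont ystar (TT - phi ystar) Iy ltac:(lra)) as [d [Hd Hc]].
    set (z := ystar + Rmin (d / 2) ((fp x0 - ystar) / 2)).
    assert (0 < Rmin (d / 2) ((fp x0 - ystar) / 2)) by (apply Rmin_pos; lra).
    pose proof (Rmin_l (d / 2) ((fp x0 - ystar) / 2)). pose proof (Rmin_r (d / 2) ((fp x0 - ystar) / 2)).
    assert (Iz : Ib z) by (unfold z, Ib in *; lra).
    assert (Sy z).
    { split; [unfold z; lra|]. specialize (Hc z Iz). unfold z in Hc at 1.
      rewrite Rabs_right in Hc; [|unfold z; lra].
      assert (phi ystar <= phi z) by (apply phi_mono; auto; unfold z; lra).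
      rewrite Rabs_right in Hc; lra. }
    specialize (U z H4). unfold z in U. lra. }
  assert (x0 < ystar).
  { destruct (Req_dec x0 ystar) as [E|]; [|lra]. rewrite <- E, phi_x0 in Above. lra. }
  split; [lra|]. split; [lra|]. split; [auto|]. split; auto.
Qed.

Definition Mset (y : R) := Ib y /\ forall x, Ib x -> forall eps, eps > 0 ->
  exists h, H h /\ Rabs (h x - y) < eps.

Lemma Mset_ystar : Mset ystar.
Proof.
  destruct ystar_props as [Y1 [Y2 [Y3 [Y4 Y5]]]].
  split; auto. intros x Hx eps He.
  set (w := Rmax x0 (ystar - eps / 2)).
  assert (Hw1 : x0 <= w) by apply Rmax_l.
  assert (Hw2 : ystar - eps / 2 <= w) by apply Rmax_r.
  assert (Hw3 : w < ystar) by (unfold w; apply Rmax_lub_lt; lra).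
  assert (Iw : Ib w) by (pose proof I_x0; unfold Ib in *; lra).
  pose proof (Y4 w (conj Hw1 Hw3)) as Pw.
  destruct (dense ((phi w + TT) / 2 - phi x) ((TT - phi w) / 2)) as [h [Hh Eh]]; [lra|].
  apply Rabs_def2 in Eh.
  exists h. split; auto.
  assert (Ihx : Ib (h x)) by (apply H_I; auto).
  pose proof (phi_equiv h x Hh Hx).
  assert (w < h x) by (apply phi_lt_inv; auto; lra).
  assert (h x < ystar).
  { destruct (Rlt_or_le (h x) ystar); auto. pose proof (phi_mono ystar (h x) Y3 Ihx H2). lra. }
  apply Rabs_def1; lra.
Qed.

Lemma Mset_closed : rel_closed a b Mset.
Proof.
  split; [intros x [Hx _]; auto|].
  intros y Hy Hap. split; auto. intros x Hx eps He.
  destruct (Hap (eps / 2) ltac:(lra)) as [y' [[Iy' My'] D]].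
  destruct (My' x Hx (eps / 2) ltac:(lra)) as [h [Hh Dh]].
  exists h. split; auto.
  replace (h x - y) with ((h x - y') + (y' - y)) by ring.
  eapply Rle_lt_trans; [apply Rabs_triang|]. lra.
Qed.

Lemma Mset_inv : invariant_set (stab G a b) Mset.
Proof.
  intros g Hg y. pose proof (H_G g Hg) as Gg. split.
  - intros [Iy My]. exists (ginv g y). split; [|apply ginv_r; auto].
    split; [apply H_I; auto; apply H_inv; auto|].
    intros x Hx eps He.
    destruct (cont_eps (ginv g) (G_cont _ (G_inv g Gg)) y eps He) as [d [Hd Hc]].
    destruct (My x Hx d Hd) as [h [Hh Dh]].
    exists (fun z => ginv g (h z)). split; [solveH|]. apply Hc; auto.
  - intros [x [[Ix Mx] <-]]. split; [apply H_I; auto|].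
    intros z Hz eps He.
    destruct (cont_eps g (G_cont _ Gg) x eps He) as [d [Hd Hc]].
    destruct (Mx z Hz d Hd) as [h [Hh Dh]].
    exists (fun y => g (h y)). split; [solveH|]. apply Hc; auto.
Qed.

Lemma Mset_smallest : smallest Mset.
Proof.
  intros N [z Nz] [NI NC] Inv y [Iy My].
  apply NC; auto. intros eps He.
  destruct (My z (NI z Nz) eps He) as [h [Hh Dh]].
  exists (h z). split; auto. apply (Inv h Hh). exists z. auto.
Qed.

Lemma Lambda_B x : Lambda G a b x <-> Mset x.
Proof.
  apply Lambda_char; [exists ystar; apply Mset_ystar| apply Mset_closed| apply Mset_inv| apply Mset_smallest].
Qed.

Lemma part4_B k y : H k -> tau k = 0 -> Mset y -> k y = y.
Proof.
  intros Hk Tk [Iy My]. pose proof (H_G k Hk) as Gk.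
  destruct ystar_props as [Y1 [Y2 [Y3 [Y4 Y5]]]].
  apply NNPP. intro Hne.
  set (u := k y). set (v := ginv k y).
  assert (Iu : Ib u) by (apply H_I; auto).
  assert (Iv : Ib v) by (apply H_I; auto; apply H_inv; auto).
  assert (Pu : phi u = phi y) by (unfold u; rewrite phi_equiv; auto; lra).
  assert (Pv : phi v = phi y).
  { unfold v. rewrite phi_equiv; auto; [|apply H_inv; auto]. rewrite (T_inv tau tau_is_tau); auto. lra. }
  assert (Huv : k v = y) by (unfold v; apply ginv_r; auto).
  set (y1 := Rmin u v). set (y2 := Rmax u v).
  assert (y1 < y < y2).
  { unfold y1, y2. destruct (Rlt_or_le y u).
    - assert (v < y). { apply (G_lt k); auto. rewrite Huv. auto. }
      split; [apply (Rle_lt_trans _ v); [apply Rmin_r|lra]|apply (Rlt_le_trans _ u); [lra|apply Rmax_l]].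
    - assert (u < y) by (unfold u in *; lra).
      assert (y < v). { apply (G_lt k); auto. rewrite Huv. auto. }
      split; [apply (Rle_lt_trans _ u); [apply Rmin_l|lra]|apply (Rlt_le_trans _ v); [lra|apply Rmax_r]]. }
  assert (I1 : Ib y1) by (unfold y1, Rmin; destruct (Rle_dec u v); auto).
  assert (I2 : Ib y2) by (unfold y2, Rmax; destruct (Rle_dec u v); auto).
  assert (P1 : phi y1 = phi y) by (unfold y1, Rmin; destruct (Rle_dec u v); auto).
  assert (P2 : phi y2 = phi y) by (unfold y2, Rmax; destruct (Rle_dec u v); auto).
  destruct (My ystar Y3 (Rmin (y - y1) (y2 - y)) ltac:(apply Rmin_pos; lra)) as [h [Hh Dh]].
  pose proof (Rmin_l (y - y1) (y2 - y)). pose proof (Rmin_r (y - y1) (y2 - y)).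
  apply Rabs_def2 in Dh. pose proof (H_G h Hh) as Gh.
  assert (Ihy : Ib (h ystar)) by (apply H_I; auto).
  assert (G1 : ginv h y1 < ystar) by (apply (G_lt h); auto; rewrite ginv_r; auto; lra).
  set (z := Rmax x0 ((ginv h y1 + ystar) / 2)).
  assert (Z1 : x0 <= z) by apply Rmax_l.
  assert (Z2 : (ginv h y1 + ystar) / 2 <= z) by apply Rmax_r.
  assert (Z3 : z < ystar) by (unfold z; apply Rmax_lub_lt; lra).
  assert (Iz : Ib z) by (pose proof I_x0; unfold Ib in *; lra).
  assert (Ihz : Ib (h z)) by (apply H_I; auto).
  assert (Q1 : y1 <= h z).
  { rewrite <- (ginv_r h y1) by auto. apply G_le; auto. lra. }
  assert (Q2 : h z <= y2).
  { assert (h z < h ystar) by (apply G_lt; auto). lra. }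
  pose proof (phi_mono y1 (h z) I1 Ihz Q1) as R1. pose proof (phi_mono (h z) y2 Ihz I2 Q2) as R2.
  pose proof (phi_mono y1 (h ystar) I1 Ihy ltac:(lra)) as R3.
  pose proof (phi_mono (h ystar) y2 Ihy I2 ltac:(lra)) as R4.
  rewrite phi_equiv in R1, R2, R3, R4; auto.
  pose proof (Y4 z (conj Z1 Z3)). lra.
Qed.

End CaseB.

Section CaseA.
Variable e : R -> R.
Hypothesis He : H e.
Hypothesis Pe : pos e.
Hypothesis Le : forall p, H p -> pos p -> lef e p.

Lemma Ge : G e. Proof. apply H_G; auto. Qed.
#[local] Hint Resolve Ge : core.

Lemma ker_lt_e k : H k -> kerp k -> ltf k e.
Proof.
  intros Hk [p [Hp E]]. apply (O3 _ (fun x => x)); auto; try solveH.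
  exists p. split; auto. lra.
Qed.

Definition FixK x := Ib x /\ forall k, H k -> kerp k -> k x = x.

Lemma FixK_act g x : H g -> FixK x -> exists n, g x = zpw e n x /\ tau g = IZR n * tau e.
Proof.
  intros Hg [Ix Fx]. destruct (caseA_repr e g He Pe Le Hg) as [n En]. exists n.
  assert (Hz : H (zpw e n)) by solveH. pose proof (H_G _ Hz) as Gz.
  split.
  - assert (Kk : kerp (fun y => ginv (zpw e n) (g y))).
    { destruct En as [p [Hp Ep]]. exists p. split; auto. rewrite Ep. apply ginv_l; auto. }
    pose proof (Fx (fun y => ginv (zpw e n) (g y)) ltac:(solveH) Kk). apply (f_equal (zpw e n)) in H0.
    rewrite ginv_r in H0; auto.
  - rewrite (T_eqf tau tau_is_tau g (zpw e n)); auto. apply (T_zpw tau tau_is_tau); auto.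
Qed.

Lemma FixK_inv g x : H g -> FixK x -> FixK (g x).
Proof.
  intros Hg [Ix Fx]. pose proof (H_G g Hg) as Gg. split; [apply H_I; auto|].
  intros k Hk Kk.
  assert (Kk' : kerp (fun y => ginv g (k (g y)))).
  { destruct Kk as [p [Hp Ep]]. exists (ginv g p). split; [apply H_I; auto; solveH|].
    rewrite ginv_r, Ep; auto. }
  pose proof (Fx (fun y => ginv g (k (g y))) ltac:(solveH) Kk'). apply (f_equal g) in H0. rewrite ginv_r in H0; auto.
Qed.

Lemma sup_K x : Ib x -> exists s, FixK s /\
  forall eps, eps > 0 -> exists k, H k /\ kerp k /\ Rabs (k x - s) < eps.
Proof.
  intro Ix. set (KS := fun z => exists k, H k /\ kerp k /\ z = k x).
  assert (Iex : Ib (e x)) by (apply H_I; auto).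
  destruct (completeness KS) as [s [U L]].
  - exists (e x). intros z [k [Hk [Kk ->]]]. left. apply ker_lt_e; auto.
  - exists x. exists (fun y => y). split; [solveH|]. split; auto.
    exists x. split; auto.
  - assert (Hxs : x <= s) by (apply U; exists (fun y => y); split; [solveH|]; split; auto; exists x; auto).
    assert (Hse : s <= e x) by (apply L; intros z [k [Hk [Kk ->]]]; left; apply ker_lt_e; auto).
    assert (Is : Ib s) by (unfold Ib in *; pose proof (Pe x Ix); lra).
    assert (Key : forall k, H k -> kerp k -> s <= ginv k s).
    { intros k Hk Kk. apply L. intros z [k' [Hk' [Kk' ->]]].
      pose proof (H_G k Hk) as Gk. apply (G_le k); auto. rewrite ginv_r; auto.
      apply U. exists (fun y => k (k' y)). split; [solveH|]. split; auto. apply kerp_comp; auto. }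
    exists s. split.
    + split; auto. intros k Hk Kk. pose proof (H_G k Hk) as Gk.
      pose proof (Key k Hk Kk). pose proof (Key (ginv k) (H_inv k Hk) (kerp_inv k Hk Kk)).
      rewrite ginv_ginv in H1; auto.
      assert (k s <= s). { rewrite <- (ginv_r k s) at 2; auto. apply G_le; auto. }
      lra.
    + intros eps Heps. apply NNPP. intro N.
      assert (s <= s - eps); [|lra]. apply L. intros z [k [Hk [Kk ->]]].
      destruct (Rle_or_lt (k x) (s - eps)); auto. exfalso. apply N. exists k. split; auto. split; auto.
      assert (k x <= s) by (apply U; exists k; auto). rewrite Rabs_left1; lra.
Qed.

Definition Orb x z := exists h, H h /\ h x = z.

Lemma Orb_inv x : invariant_set (stab G a b) (Orb x).
Proof.
  intros g Hg y. pose proof (H_G g Hg) as Gg. split.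
  - intros [h [Hh <-]]. exists (ginv g (h x)). split; [|apply ginv_r; auto].
    exists (fun z => ginv g (h z)). split; auto. solveH.
  - intros [z [[h [Hh <-]] <-]]. exists (fun z => g (h z)). split; auto. solveH.
Qed.

Lemma Orb_closed x : FixK x -> rel_closed a b (Orb x).
Proof.
  intros [Ix Fx]. split; [intros z [h [Hh <-]]; apply H_I; auto|].
  intros z Iz Hap.
  destruct (arch_z_down e x z) as [lo Hlo]; auto.
  destruct (arch_z e x z) as [hi Hhi]; auto.
  set (P := fun n => zpw e n x <= z).
  assert (Plo : P lo) by (unfold P; lra).
  assert (Nhi : ~ P hi) by (unfold P; lra).
  assert (lo < hi)%Z.
  { destruct (Z.lt_ge_cases lo hi); auto. exfalso. apply Nhi. unfold P.
    pose proof (zpw_mono_le e hi lo He Pe H0 x Ix). lra. }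
  destruct (discrete_ivt P lo hi Plo Nhi H0) as [n [_ [Pn Nn]]]. unfold P in Pn, Nn.
  destruct (Req_dec (zpw e n x) z) as [E|Ne].
  - exists (zpw e n). split; auto. solveH.
  - exfalso.
    destruct (Hap (Rmin (z - zpw e n x) (zpw e (n + 1) x - z)) ltac:(apply Rmin_pos; lra)) as [w [[h [Hh <-]] D]].
    pose proof (Rmin_l (z - zpw e n x) (zpw e (n + 1) x - z)).
    pose proof (Rmin_r (z - zpw e n x) (zpw e (n + 1) x - z)).
    destruct (FixK_act h x Hh (conj Ix Fx)) as [m [Em _]]. rewrite Em in D.
    apply Rabs_def2 in D.
    destruct (Z.le_gt_cases m n).
    + pose proof (zpw_mono_le e m n He Pe H3 x Ix). lra.
    + pose proof (zpw_mono_le e (n + 1) m He Pe ltac:(lia) x Ix). lra.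
Qed.

Lemma Orb_minimal x : FixK x -> minimal_set (stab G a b) a b (Orb x).
Proof.
  intro Fx. split; [exists x; exists (fun y => y); split; auto; solveH|].
  split; [apply Orb_closed; auto|]. split; [apply Orb_inv|].
  intros N [z0 Nz0] ClN InvN Sub y [h [Hh <-]].
  destruct (Sub z0 Nz0) as [h0 [Hh0 E0]].
  pose proof (H_G h0 Hh0) as Gh0.
  apply (InvN (fun z => h (ginv h0 z))); [solveH|].
  exists z0. split; auto. rewrite <- E0, ginv_l; auto.
Qed.

Lemma Lambda_A y : Lambda G a b y <-> FixK y.
Proof.
  split.
  - intros [M [[NeM [ClM [InvM MinM]]] My]].
    assert (Iy : Ib y) by (apply ClM; auto).
    destruct (sup_K y Iy) as [s [Fs Aps]].
    assert (Ms : M s).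
    { destruct ClM as [CI CC]. apply CC; [apply Fs|]. intros eps Heps.
      destruct (Aps eps Heps) as [k [Hk [Kk D]]]. exists (k y). split; auto.
      apply (InvM k Hk). exists y; auto. }
    assert (Sub : forall z, Orb s z -> M z).
    { intros z [h [Hh <-]]. apply (InvM h Hh). exists s; auto. }
    pose proof (Orb_minimal s Fs) as [NeO [ClO [InvO _]]].
    destruct (MinM (Orb s) NeO ClO InvO Sub y My) as [h [Hh <-]].
    apply FixK_inv; auto.
  - intro Fy. exists (Orb y). split; [apply Orb_minimal; auto|]. exists (fun z => z). split; auto. solveH.
Qed.

Lemma FixK_closed : rel_closed a b FixK.
Proof.
  split; [intros x [Ix _]; auto|].
  intros x Ix Hap. split; auto. intros k Hk Kk.
  apply fix_closed; [apply G_cont, H_G; auto|]. intros eps Heps.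
  destruct (Hap eps Heps) as [y [[Iy Fy] D]]. exists y. split; auto.
Qed.

Lemma FixK_ne : exists x, FixK x.
Proof. destruct (sup_K x0 I_x0) as [s [Fs _]]. eauto. Qed.


Lemma tau_e_pos : 0 < tau e.
Proof. apply tau_pos; auto. Qed.
Lemma Lpos : 0 < e x0 - x0.
Proof. pose proof (Pe x0 I_x0). lra. Qed.

Definition brk (n : Z) (y : R) := zpw e n x0 <= y < zpw e (n + 1) x0.

Lemma brk_ex y : Ib y -> exists n, brk n y.
Proof.
  intro Iy.
  destruct (arch_z_down e x0 y) as [lo Hlo]; auto.
  destruct (arch_z e x0 y) as [hi Hhi]; auto.
  set (P := fun n => zpw e n x0 <= y).
  assert (Plo : P lo) by (unfold P; lra).
  assert (Nhi : ~ P hi) by (unfold P; lra).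
  assert (lo < hi)%Z.
  { destruct (Z.lt_ge_cases lo hi); auto. exfalso. apply Nhi. unfold P.
    pose proof (zpw_mono_le e hi lo He Pe H0 x0 I_x0). lra. }
  destruct (discrete_ivt P lo hi Plo Nhi H0) as [n [_ [Pn Nn]]]. unfold P in Pn, Nn.
  exists n. split; lra.
Qed.

Lemma brk_uniq n n' y : brk n y -> brk n' y -> n = n'.
Proof.
  intros [A B] [C D]. destruct (Z.lt_total n n') as [Hl|[Hl|Hl]]; auto; exfalso.
  - pose proof (zpw_mono_le e (n + 1) n' He Pe ltac:(lia) x0 I_x0). lra.
  - pose proof (zpw_mono_le e (n' + 1) n He Pe ltac:(lia) x0 I_x0). lra.
Qed.

Definition nf (y : R) : Z := epsilon (inhabits 0%Z) (fun n => brk n y).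
Lemma nf_spec y : Ib y -> brk (nf y) y.
Proof. intro Iy. unfold nf. apply epsilon_spec. apply brk_ex; auto. Qed.
Lemma nf_eq y n : Ib y -> brk n y -> nf y = n.
Proof. intros Iy B. apply (brk_uniq _ _ y); auto. apply nf_spec; auto. Qed.

Definition Phi (n : Z) (y : R) := tau e * (IZR n + (zpw e (- n) y - x0) / (e x0 - x0)).
Definition phiA (y : R) := Phi (nf y) y.

Lemma frac_bounds n y : brk n y -> x0 <= zpw e (- n) y < e x0.
Proof.
  intros [A B]. pose proof (H_G (zpw e (- n)) ltac:(solveH)) as Gz. split.
  - rewrite <- (zpw_opp e n x0) by auto. apply G_le; auto.
  - replace (e x0) with (zpw e (- n) (zpw e (n + 1) x0)).
    + apply G_lt; auto.
    + rewrite <- zpw_add by auto. replace (- n + (n + 1))%Z with 1%Z by lia. reflexivity.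
Qed.

Lemma Phi_cont n y eps : eps > 0 -> exists delta, delta > 0 /\
  forall y', Rabs (y' - y) < delta -> Rabs (Phi n y' - Phi n y) < eps.
Proof.
  intro He'. pose proof tau_e_pos. pose proof Lpos.
  assert (Gz : G (zpw e (- n))) by (apply H_G; solveH).
  destruct (cont_eps _ (G_cont _ Gz) y (eps * (e x0 - x0) / tau e)) as [d [Hd Hc]].
  { apply Rdiv_lt_0_compat; [apply Rmult_lt_0_compat|]; lra. }
  exists d. split; auto. intros y' Hy'. specialize (Hc y' Hy').
  unfold Phi.
  replace (tau e * (IZR n + (zpw e (- n) y' - x0) / (e x0 - x0)) -
           tau e * (IZR n + (zpw e (- n) y - x0) / (e x0 - x0)))
    with (tau e / (e x0 - x0) * (zpw e (- n) y' - zpw e (- n) y)) by (field; lra).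
  rewrite Rabs_mult, (Rabs_right (tau e / (e x0 - x0))) by (left; apply Rdiv_lt_0_compat; lra).
  apply (Rmult_lt_reg_l ((e x0 - x0) / tau e)); [apply Rdiv_lt_0_compat; lra|].
  replace ((e x0 - x0) / tau e * (tau e / (e x0 - x0) * Rabs (zpw e (- n) y' - zpw e (- n) y)))
    with (Rabs (zpw e (- n) y' - zpw e (- n) y)) by (field; lra).
  replace ((e x0 - x0) / tau e * eps) with (eps * (e x0 - x0) / tau e) by (field; lra). auto.
Qed.

Lemma phiA_mono y y' : Ib y -> Ib y' -> y <= y' -> phiA y <= phiA y'.
Proof.
  intros Iy Iy' Le'. pose proof (nf_spec y Iy) as By. pose proof (nf_spec y' Iy') as By'.
  pose proof tau_e_pos. pose proof Lpos.
  pose proof (frac_bounds _ _ By). pose proof (frac_bounds _ _ By').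
  unfold phiA, Phi. set (n := nf y) in *. set (n' := nf y') in *.
  assert (n <= n')%Z.
  { destruct (Z.le_gt_cases n n'); auto. exfalso. destruct By as [A B]. destruct By' as [C D].
    pose proof (zpw_mono_le e (n' + 1) n He Pe ltac:(lia) x0 I_x0). lra. }
  destruct (Z.eq_dec n n') as [E|Ne].
  - rewrite <- E. apply Rmult_le_compat_l; [lra|]. apply Rplus_le_compat_l.
    unfold Rdiv. apply Rmult_le_compat_r; [left; apply Rinv_0_lt_compat; lra|].
    assert (zpw e (- n) y <= zpw e (- n) y'); [|lra].
    apply G_le; auto. apply H_G; solveH.
  - assert (IZR n + 1 <= IZR n') by (rewrite <- plus_IZR; apply IZR_le; lia).
    assert (0 <= (zpw e (- n') y' - x0) / (e x0 - x0)) by (unfold Rdiv; apply Rmult_le_pos; [lra| left; apply Rinv_0_lt_compat; lra]).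
    assert ((zpw e (- n) y - x0) / (e x0 - x0) < 1).
    { apply (Rmult_lt_reg_r (e x0 - x0)); [lra|].
      replace ((zpw e (- n) y - x0) / (e x0 - x0) * (e x0 - x0)) with (zpw e (- n) y - x0) by (field; lra).
      lra. }
    apply Rmult_le_compat_l; lra.
Qed.

Lemma phiA_equiv g y : H g -> FixK y -> phiA (g y) = phiA y + tau g.
Proof.
  intros Hg Fy. destruct (FixK_act g y Hg Fy) as [m [Em Tm]].
  pose proof (proj1 Fy) as Iy. pose proof (nf_spec y Iy) as By.
  assert (Igy : Ib (g y)) by (apply H_I; auto).
  rewrite Em in Igy |- *. rewrite Tm.
  assert (Gm : G (zpw e m)) by (apply H_G; solveH).
  assert (E : nf (zpw e m y) = (nf y + m)%Z).
  { apply nf_eq; auto. destruct By as [A B]. split.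
    - replace (nf y + m)%Z with (m + nf y)%Z by lia. rewrite zpw_add by auto. apply G_le; auto.
    - replace (nf y + m + 1)%Z with (m + (nf y + 1))%Z by lia. rewrite zpw_add by auto. apply G_lt; auto. }
  unfold phiA, Phi. rewrite E.
  replace (zpw e (- (nf y + m)) (zpw e m y)) with (zpw e (- nf y) y).
  - rewrite plus_IZR. ring.
  - rewrite <- zpw_add by auto. f_equal. lia.
Qed.

Lemma phiA_cont y eps : Ib y -> eps > 0 -> exists delta, delta > 0 /\
  forall y', Ib y' -> Rabs (y' - y) < delta -> Rabs (phiA y' - phiA y) < eps.
Proof.
  intros Iy Heps. pose proof (nf_spec y Iy) as By. set (n := nf y) in *.
  destruct By as [A B].
  destruct (Phi_cont n y eps Heps) as [d1 [Hd1 C1]].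
  destruct (Req_dec (zpw e n x0) y) as [E|Ne].
  - destruct (Phi_cont (n - 1) y eps Heps) as [d2 [Hd2 C2]].
    assert (Lo : zpw e (n - 1) x0 < y).
    { rewrite <- E. apply zpw_mono; auto. lia. }
    assert (Eq : Phi (n - 1) y = Phi n y).
    { unfold Phi. rewrite <- E. rewrite <- !zpw_add by auto.
      replace (- (n - 1) + n)%Z with 1%Z by lia. replace (- n + n)%Z with 0%Z by lia.
      change (zpw e 1 x0) with (e x0). change (zpw e 0 x0) with x0.
      pose proof Lpos. rewrite minus_IZR. field. lra. }
    set (d0 := Rmin (y - zpw e (n - 1) x0) (zpw e (n + 1) x0 - y)).
    assert (Hd0 : d0 > 0) by (apply Rmin_pos; lra).
    exists (Rmin d0 (Rmin d1 d2)). split; [apply Rmin_pos; [lra| apply Rmin_pos; lra]|].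
    intros y' Iy' D.
    pose proof (Rmin_l d0 (Rmin d1 d2)). pose proof (Rmin_r d0 (Rmin d1 d2)).
    pose proof (Rmin_l d1 d2). pose proof (Rmin_r d1 d2).
    pose proof (Rmin_l (y - zpw e (n - 1) x0) (zpw e (n + 1) x0 - y)) as M1.
    pose proof (Rmin_r (y - zpw e (n - 1) x0) (zpw e (n + 1) x0 - y)) as M2.
    fold d0 in M1, M2. pose proof D as D'. apply Rabs_def2 in D'.
    unfold phiA. fold n.
    destruct (Rle_or_lt y y') as [Hle|Hlt].
    + rewrite (nf_eq y' n Iy'); [apply C1; lra|]. split; lra.
    + rewrite (nf_eq y' (n - 1) Iy'); [rewrite <- Eq; apply C2; lra|].
      split; [lra|]. replace (n - 1 + 1)%Z with n by lia. lra.
  - set (d0 := Rmin (y - zpw e n x0) (zpw e (n + 1) x0 - y)).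
    assert (Hd0 : d0 > 0) by (apply Rmin_pos; lra).
    exists (Rmin d0 d1). split; [apply Rmin_pos; lra|].
    intros y' Iy' D.
    pose proof (Rmin_l d0 d1). pose proof (Rmin_r d0 d1).
    pose proof (Rmin_l (y - zpw e n x0) (zpw e (n + 1) x0 - y)) as M1.
    pose proof (Rmin_r (y - zpw e n x0) (zpw e (n + 1) x0 - y)) as M2.
    fold d0 in M1, M2. pose proof D as D'. apply Rabs_def2 in D'.
    unfold phiA. fold n.
    rewrite (nf_eq y' n Iy'); [apply C1; lra|]. split; lra.
Qed.

End CaseA.

Lemma rel_closed_iff (P Q : R -> Prop) : (forall x, P x <-> Q x) -> rel_closed a b Q -> rel_closed a b P.
Proof.
  intros E [C1 C2]. split.
  - intros x Px. apply C1, E; auto.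
  - intros x Ix Hap. apply E, C2; auto. intros eps He. destruct (Hap eps He) as [y [Py D]].
    exists y. split; auto. apply E; auto.
Qed.

Theorem main_sec :
  (forall g, G g -> maps_onto_closed g a b \/ disjoint_open g a b) /\
  (exists tau : (R -> R) -> R,
     is_tau G a b tau /\
     (forall tau', is_tau G a b tau' ->
        exists c, c > 0 /\ forall g, stab G a b g -> tau' g = c * tau g) /\
     (exists x, Lambda G a b x) /\
     rel_closed a b (Lambda G a b) /\
     semi_conjugated (stab G a b) (Lambda G a b) tau /\
     (forall g, stab G a b g -> tau g = 0 -> forall x, Lambda G a b x -> g x = x)).
Proof.
  split; [exact part1|]. exists tau. split; [exact tau_is_tau|]. split; [exact tau_unique|].
  destruct (classic caseA) as [[e [He [Pe Le]]]|NA].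
  - pose proof (Lambda_A e He Pe Le) as LA.
    split; [destruct (FixK_ne e He Pe) as [x Fx]; exists x; apply LA; auto|].
    split; [apply (rel_closed_iff _ _ LA); apply FixK_closed|].
    split.
    + exists (phiA e). split; [|split].
      * intros x y Lx Ly Le'. apply LA in Lx, Ly. apply phiA_mono; auto; [apply Lx|apply Ly].
      * intros x Lx eps Heps. apply LA in Lx.
        destruct (phiA_cont e He Pe x eps (proj1 Lx) Heps) as [d [Hd C]].
        exists d. split; auto. intros y Ly D. apply C; auto. apply LA in Ly. apply Ly.
      * intros g x Hg Lx. apply LA in Lx. apply phiA_equiv; auto.
    + intros g Hg Tg x Lx. apply LA in Lx. apply Lx; auto. apply tau_kerp; auto.
  - pose proof (Lambda_B NA) as LB.
    split; [exists ystar; apply LB, (Mset_ystar NA)|].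
    split; [apply (rel_closed_iff _ _ LB); apply Mset_closed|].
    split.
    + exists phi. split; [|split].
      * intros x y Lx Ly Le'. apply LB in Lx, Ly. apply phi_mono; auto; [apply Lx|apply Ly].
      * intros x Lx eps Heps. apply LB in Lx.
        destruct (phi_cont NA x eps (proj1 Lx) Heps) as [d [Hd C]].
        exists d. split; auto. intros y Ly D. apply C; auto. apply LB in Ly. apply Ly.
      * intros g x Hg Lx. apply LB in Lx. apply phi_equiv; auto. apply Lx.
    + intros g Hg Tg x Lx. apply LB in Lx. apply (part4_B NA); auto.
Qed.

End Main.

Theorem theoremt (G : (R -> R) -> Prop) (a b : R)
  (HG : homeo_group G)
  (Hnl : without_linked_fixed_points G)
  (Hab : succ_fixed G a b) :
  (* (1) *)
  (forall g, G g -> maps_onto_closed g a b \/ disjoint_open g a b) /\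
  (* (2) existence, uniqueness up to positive scalar, and (3), (4) *)
  (exists tau : (R -> R) -> R,
     is_tau G a b tau /\
     (forall tau', is_tau G a b tau' ->
        exists c, c > 0 /\ forall g, stab G a b g -> tau' g = c * tau g) /\
     (* (3) *)
     (exists x, Lambda G a b x) /\
     rel_closed a b (Lambda G a b) /\
     semi_conjugated (stab G a b) (Lambda G a b) tau /\
     (* (4) *)
     (forall g, stab G a b g -> tau g = 0 -> forall x, Lambda G a b x -> g x = x)).
Proof. exact (main_sec G a b HG Hnl Hab). Qed.
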